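(* The Farey graph $F$ is a typical $\Pi$-graph, and every typical $\Pi$-graph is minor-equivalent to $F$. In other words, up to minor-equivalence, the Farey graph is the unique typical $\Pi$-graph.
   Context: Graphs are simple and may be infinite. The Farey graph $F$ is the graph with vertex set $\mathbb{Q}\cup\{\infty\}$ in which two rationals $a/b$ and $c/d$ written in lowest terms (allowing $\infty=(\pm1)/0$) are adjacent if and only if $ad-bc=\pm1$; any graph isomorphic to it is also called the Farey graph. A graph is infinitely edge-connected if it has at least two vertices and $G-E'$ is connected for every finite set $E'$ of edges. Paths are independent if they are internally vertex-disjoint. A $\Pi$-graph is an infinitely edge-connected graph that does not contain infinitely many independent paths between any two of its vertices. A graph $H$ is a minor of $G$ if there are pairwise disjoint non-empty vertex sets $V_h\subseteq V(G)$ ($h\in V(H)$), each inducing a connected subgraph of $G$ (the branch sets), such that for every edge $hh'$ of $H$ there is an edge of $G$ between $V_h$ and $V_{h'}$. A $\Pi$-graph is typical if it occurs as a minor in every $\Pi$-graph. Two graphs are minor-equivalent if each is a minor of the other. *)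

(* Defs.v *)
From Stdlib Require Import ZArith Lia List.
Import ListNotations.
Set Implicit Arguments.

Record graph := Graph {
  vert :> Type;
  adj : vert -> vert -> Prop;
  adj_sym : forall x y, adj x y -> adj y x;
  adj_irrefl : forall x, ~ adj x x
}.

Fixpoint chain {V : Type} (R : V -> V -> Prop) (l : list V) : Prop :=
  match l with
  | x :: ((y :: _) as t) => R x y /\ chain R t
  | _ => True
  end.

Definition is_path {V : Type} (R : V -> V -> Prop) (p : list V) (x y : V) : Prop :=
  hd_error p = Some x /\ last p x = y /\ NoDup p /\ chain R p.

Definition connected_in {V : Type} (R : V -> V -> Prop) (S : V -> Prop) : Prop :=
  forall x y, S x -> S y -> exists p, is_path R p x y /\ Forall S p.

Definition adj_minus (G : graph) (E' : list (G * G)) (x y : G) : Prop :=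
  adj G x y /\ ~ In (x, y) E' /\ ~ In (y, x) E'.

Definition inf_edge_connected (G : graph) : Prop :=
  (exists x y : G, x <> y) /\
  forall E' : list (G * G), connected_in (@adj_minus G E') (fun _ => True).

Definition interior {V : Type} (p : list V) : list V := removelast (tl p).

Definition inf_indep_paths (G : graph) : Prop :=
  exists (u v : G) (P : nat -> list G),
    u <> v /\
    (forall n, is_path (adj G) (P n) u v) /\
    (forall n m, P n = P m -> n = m) /\
    (forall n m w, n <> m -> In w (interior (P n)) -> ~ In w (interior (P m))).

Definition Pi_graph (G : graph) : Prop :=
  inf_edge_connected G /\ ~ inf_indep_paths G.

Definition minor (H G : graph) : Prop :=
  exists B : H -> G -> Prop,
    (forall h, exists g, B h g) /\
    (forall h h' g, h <> h' -> B h g -> ~ B h' g) /\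
    (forall h, connected_in (adj G) (B h)) /\
    (forall h h', adj H h h' -> exists g g', B h g /\ B h' g' /\ adj G g g').

Definition typical (G : graph) : Prop :=
  Pi_graph G /\ forall G' : graph, Pi_graph G' -> minor G G'.

Definition minor_equiv (G H : graph) : Prop := minor G H /\ minor H G.

(** Farey graph: vertices are Q ∪ {∞}, each written uniquely in lowest terms
    a/b with b > 0, and ∞ represented as 1/0. *)
Definition farey_vert : Type :=
  { p : Z * Z | Z.gcd (fst p) (snd p) = 1%Z /\
                ((0 < snd p)%Z \/ (snd p = 0%Z /\ fst p = 1%Z)) }.

Definition farey_adj (x y : farey_vert) : Prop :=
  let '(a, b) := proj1_sig x in
  let '(c, d) := proj1_sig y in
  (a * d - b * c = 1 \/ a * d - b * c = -1)%Z.

Lemma farey_adj_sym : forall x y, farey_adj x y -> farey_adj y x.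
Proof.
  intros [[a b] Hx] [[c d] Hy]; unfold farey_adj; simpl; lia.
Qed.

Lemma farey_adj_irrefl : forall x, ~ farey_adj x x.
Proof.
  intros [[a b] Hx]; unfold farey_adj; simpl; lia.
Qed.

Definition Farey : graph := @Graph farey_vert farey_adj farey_adj_sym farey_adj_irrefl.

(* Main.v *)
Require Import Defs.
From Stdlib Require Import ZArith Lia List Classical ClassicalEpsilon ProofIrrelevance.
Import ListNotations.

Module MP1.
Import ListNotations.
Set Implicit Arguments.

Section Lists.
Context {V : Type}.

Lemma chain_cons (R : V -> V -> Prop) x l : chain R (x :: l) -> chain R l.
Proof. destruct l; simpl; tauto. Qed.

Lemma chain_mono (R R' : V -> V -> Prop) l :
  (forall x y, R x y -> R' x y) -> chain R l -> chain R' l.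
Proof.
  intros H; induction l as [|x l IH]; simpl; auto.
  destruct l as [|y l]; auto. intros [H1 H2]; split; auto.
Qed.

Lemma chain_app (R : V -> V -> Prop) l1 x l2 :
  chain R (l1 ++ x :: l2) <-> chain R (l1 ++ [x]) /\ chain R (x :: l2).
Proof.
  induction l1 as [|y l1 IH]; simpl.
  - tauto.
  - destruct l1 as [|z l1]; simpl in *.
    + tauto.
    + rewrite IH. tauto.
Qed.

Lemma chain_rev (R : V -> V -> Prop) l :
  (forall x y, R x y -> R y x) -> chain R l -> chain R (rev l).
Proof.
  intros Hs; induction l as [|x l IH]; simpl; auto.
  destruct l as [|y l]; simpl; auto.
  intros [H1 H2]. specialize (IH H2). simpl in IH.
  rewrite <- app_assoc. simpl. apply chain_app. split; auto. simpl. auto.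
Qed.

Lemma last_app_cons (l1 : list V) a l d : last (l1 ++ a :: l) d = last (a :: l) d.
Proof.
  induction l1 as [|b l1 IH]; auto.
  rewrite <- app_comm_cons. rewrite <- IH.
  destruct l1 as [|c l1]; reflexivity.
Qed.

Lemma last_cons_cons (a b : V) l d : last (a :: b :: l) d = last (b :: l) d.
Proof. reflexivity. Qed.

Lemma last_indep (l : list V) d d' : l <> [] -> last l d = last l d'.
Proof.
  induction l as [|a l IH]; intros H; [congruence|].
  destruct l as [|b l]; auto. rewrite !last_cons_cons. apply IH. discriminate.
Qed.

Lemma last_in (l : list V) d : l <> [] -> In (last l d) l.
Proof.
  induction l as [|a l IH]; intros H; [congruence|].
  destruct l as [|b l]; simpl; auto. right. apply IH. discriminate.
Qed.

Definition walk (R : V -> V -> Prop) (w : list V) (x y : V) : Prop :=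
  hd_error w = Some x /\ last w x = y /\ chain R w.

Lemma path_walk R p x y : is_path R p x y -> walk R p x y.
Proof. intros [H1 [H2 [H3 H4]]]; repeat split; auto. Qed.

Lemma not_NoDup_split (l : list V) :
  ~ NoDup l -> exists l1 z l2 l3, l = l1 ++ z :: l2 ++ z :: l3.
Proof.
  induction l as [|a l IH]; intros H.
  - exfalso; apply H; constructor.
  - destruct (classic (In a l)) as [Hin|Hnin].
    + destruct (in_split _ _ Hin) as [l2 [l3 E]]. exists [], a, l2, l3. subst; reflexivity.
    + destruct (classic (NoDup l)) as [Hd|Hd].
      * exfalso; apply H; constructor; auto.
      * destruct (IH Hd) as [l1 [z [l2 [l3 E]]]]. exists (a :: l1), z, l2, l3. subst; reflexivity.
Qed.

Lemma walk_to_path (R : V -> V -> Prop) w x y :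
  walk R w x y -> exists p, is_path R p x y /\ incl p w.
Proof.
  remember (length w) as n eqn:En. revert w x y En.
  induction n as [n IH] using (well_founded_induction lt_wf).
  intros w x y En [Hh [Hl Hc]].
  destruct (classic (NoDup w)) as [Hd|Hd].
  - exists w. split; [repeat split; auto | apply incl_refl].
  - destruct (not_NoDup_split Hd) as [l1 [z [l2 [l3 E]]]].
    assert (Hlen : length (l1 ++ z :: l3) < n).
    { subst n w. rewrite !length_app. simpl. rewrite length_app. simpl. lia. }
    assert (Hw' : walk R (l1 ++ z :: l3) x y).
    { subst w. repeat split.
      - destruct l1; simpl in *; auto.
      - rewrite last_app_cons. rewrite last_app_cons in Hl.
        rewrite <- Hl. change (z :: l2 ++ z :: l3) with ((z :: l2) ++ z :: l3).
        rewrite last_app_cons. reflexivity.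
      - apply chain_app in Hc. destruct Hc as [Hc1 Hc2].
        change (z :: l2 ++ z :: l3) with ((z :: l2) ++ z :: l3) in Hc2.
        apply chain_app in Hc2. apply chain_app. tauto. }
    destruct (IH _ Hlen _ x y eq_refl Hw') as [p [Hp Hi]].
    exists p. split; auto. intros u Hu. apply Hi in Hu. subst w.
    apply in_app_or in Hu. apply in_or_app. destruct Hu as [Hu|Hu]; [left; auto | right].
    destruct Hu as [Hu|Hu]; [left; auto| right; apply in_or_app; right; right; auto].
Qed.

Lemma hd_rev (l : list V) d : l <> [] -> hd_error (rev l) = Some (last l d).
Proof.
  intros H. destruct (exists_last H) as [m [b E]]. subst l.
  rewrite rev_app_distr, last_last. reflexivity.
Qed.

Lemma last_rev (l : list V) x d : hd_error l = Some x -> last (rev l) d = x.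
Proof.
  destruct l as [|a l]; [discriminate|]. simpl. intros H; injection H as ->.
  apply last_last.
Qed.

Lemma walk_rev (R : V -> V -> Prop) w x y :
  (forall a b, R a b -> R b a) -> walk R w x y -> walk R (rev w) y x.
Proof.
  intros Hs [Hh [Hl Hc]].
  assert (Hne : w <> []) by (intro; subst; discriminate).
  repeat split.
  - rewrite (hd_rev x Hne). rewrite Hl. reflexivity.
  - apply last_rev. auto.
  - apply chain_rev; auto.
Qed.

Lemma walk_app (R : V -> V -> Prop) w1 w2 x y z :
  walk R w1 x y -> walk R w2 y z -> walk R (w1 ++ tl w2) x z.
Proof.
  intros [H1 [H2 H3]] [H4 [H5 H6]].
  assert (Hne : w1 <> []) by (intro; subst; discriminate).
  destruct (exists_last Hne) as [m [c E]]. subst w1.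
  rewrite last_last in H2. subst c.
  destruct w2 as [|b t]; [discriminate|]. simpl in H4. injection H4 as ->. simpl. rewrite <- app_assoc. simpl.
  repeat split.
  - destruct m; simpl in *; auto.
  - rewrite last_app_cons. rewrite <- H5. apply last_indep. discriminate.
  - apply chain_app. split; auto.
Qed.

Lemma walk_single (R : V -> V -> Prop) x : walk R [x] x x.
Proof. repeat split. Qed.

Lemma walk_edge (R : V -> V -> Prop) x y : R x y -> walk R [x; y] x y.
Proof. intros H; repeat split; simpl; auto. Qed.

Lemma walk_mono (R R' : V -> V -> Prop) w x y :
  (forall a b, R a b -> R' a b) -> walk R w x y -> walk R' w x y.
Proof. intros H [H1 [H2 H3]]; repeat split; auto. eapply chain_mono; eauto. Qed.

Lemma chain_walk_fwd (R : V -> V -> Prop) l1 x m y l2 :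
  chain R (l1 ++ x :: m ++ y :: l2) -> walk R (x :: m ++ [y]) x y.
Proof.
  intros H. apply chain_app in H. destruct H as [_ H].
  change (x :: m ++ y :: l2) with ((x :: m) ++ y :: l2) in H.
  apply chain_app in H. destruct H as [H _].
  repeat split; auto. change (x :: m ++ [y]) with ((x :: m) ++ [y]). apply last_last.
Qed.

Lemma chain_walk_between (R : V -> V -> Prop) l x y :
  (forall a b, R a b -> R b a) -> chain R l -> In x l -> In y l ->
  exists w, walk R w x y /\ incl w l.
Proof.
  intros Hs Hc Hx Hy.
  destruct (in_split _ _ Hx) as [l1 [l2 E]]. subst l.
  apply in_app_or in Hy. destruct Hy as [Hy|[Hy|Hy]].
  - destruct (in_split _ _ Hy) as [m1 [m2 E]]. subst l1.
    rewrite <- app_assoc in Hc. simpl in Hc.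
    pose proof (@chain_walk_fwd R _ _ _ _ _ Hc) as Hw.
    exists (rev (y :: m2 ++ [x])). split.
    + apply walk_rev; auto.
    + intros u Hu. apply in_rev in Hu. apply in_or_app. simpl in Hu.
      destruct Hu as [Hu|Hu]; [left; apply in_or_app; right; left; auto|].
      apply in_app_or in Hu. destruct Hu as [Hu|[Hu|[]]].
      * left. apply in_or_app. right. right. auto.
      * right. left. auto.
  - subst y. exists [x]. split; [apply walk_single|]. intros u [Hu|[]]. subst. apply in_or_app; right; left; auto.
  - destruct (in_split _ _ Hy) as [m1 [m2 E]]. subst l2.
    pose proof (@chain_walk_fwd R _ _ _ _ _ Hc) as Hw.
    exists (x :: m1 ++ [y]). split; auto.
    intros u Hu. apply in_or_app. right. simpl in Hu. destruct Hu as [Hu|Hu]; [left; auto|right].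
    apply in_app_or in Hu. apply in_or_app. destruct Hu as [Hu|[Hu|[]]]; [left; auto| right; left; auto].
Qed.

Lemma Forall_incl (P : V -> Prop) l l' : incl l l' -> Forall P l' -> Forall P l.
Proof.
  intros Hi H. apply Forall_forall. intros x Hx. rewrite Forall_forall in H. auto.
Qed.

Lemma chain_connected (R : V -> V -> Prop) l :
  (forall a b, R a b -> R b a) -> chain R l -> connected_in R (fun x => In x l).
Proof.
  intros Hs Hc x y Hx Hy.
  destruct (@chain_walk_between R _ _ _ Hs Hc Hx Hy) as [w [Hw Hi]].
  destruct (walk_to_path Hw) as [p [Hp Hi']]. exists p. split; auto.
  apply Forall_forall. intros u Hu. auto.
Qed.

Lemma connected_ext (R : V -> V -> Prop) (A B : V -> Prop) :
  (forall x, A x <-> B x) -> connected_in R A -> connected_in R B.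
Proof.
  intros He H x y Hx Hy. apply He in Hx. apply He in Hy.
  destruct (H x y Hx Hy) as [p [Hp Hf]]. exists p; split; auto.
  eapply Forall_impl; [|exact Hf]. intros a. apply He.
Qed.

Lemma connected_union (R : V -> V -> Prop) (A B : V -> Prop) z :
  (forall a b, R a b -> R b a) ->
  connected_in R A -> connected_in R B -> A z -> B z ->
  connected_in R (fun x => A x \/ B x).
Proof.
  intros Hs HA HB Az Bz.
  assert (Hz : forall x, A x \/ B x -> exists w, walk R w x z /\ Forall (fun u => A u \/ B u) w).
  { intros x [Hx|Hx].
    - destruct (HA x z Hx Az) as [p [Hp Hf]]. exists p. split; [apply path_walk; auto|].
      eapply Forall_impl; [|exact Hf]. auto.
    - destruct (HB x z Hx Bz) as [p [Hp Hf]]. exists p. split; [apply path_walk; auto|].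
      eapply Forall_impl; [|exact Hf]. auto. }
  intros x y Hx Hy.
  destruct (Hz x Hx) as [w1 [Hw1 Hf1]]. destruct (Hz y Hy) as [w2 [Hw2 Hf2]].
  pose proof (walk_app Hw1 (walk_rev Hs Hw2)) as Hw.
  destruct (walk_to_path Hw) as [p [Hp Hi]]. exists p. split; auto.
  eapply Forall_incl; [exact Hi|]. apply Forall_app. split; auto.
  destruct (rev w2) as [|c w3] eqn:Er; simpl; auto.
  assert (Forall (fun u => A u \/ B u) (rev w2)) by (apply Forall_rev; auto).
  rewrite Er in H. inversion H; auto.
Qed.

Lemma first_split (P : V -> Prop) l :
  (exists x, In x l /\ P x) ->
  exists l1 x l2, l = l1 ++ x :: l2 /\ P x /\ Forall (fun y => ~ P y) l1.
Proof.
  induction l as [|a l IH]; intros [x [Hx HP]]; [destruct Hx|].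
  destruct (classic (P a)) as [Ha|Ha].
  - exists [], a, l. auto.
  - destruct Hx as [Hx|Hx]; [subst; contradiction|].
    destruct IH as [l1 [y [l2 [E [H1 H2]]]]]; [eauto|].
    exists (a :: l1), y, l2. subst. split; auto.
Qed.

Lemma last_split (P : V -> Prop) l :
  (exists x, In x l /\ P x) ->
  exists l1 x l2, l = l1 ++ x :: l2 /\ P x /\ Forall (fun y => ~ P y) l2.
Proof.
  intros [x [Hx HP]].
  destruct (first_split P (rev l)) as [l1 [y [l2 [E [H1 H2]]]]].
  { exists x; split; auto. apply in_rev in Hx. auto. }
  exists (rev l2), y, (rev l1). split; [|split; auto; apply Forall_rev; auto].
  rewrite <- (rev_involutive l), E. rewrite rev_app_distr. simpl. rewrite <- app_assoc. reflexivity.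
Qed.

End Lists.

End MP1.
Import MP1.

Module MP2.
Import ListNotations.
Set Implicit Arguments.

Section Paths.
Context {V : Type}.

Lemma path_same_interior (R : V -> V -> Prop) p a : is_path R p a a -> interior p = [].
Proof.
  intros [Hh [Hl [Hd Hc]]].
  destruct p as [|x t]; [discriminate|]. simpl in Hh. injection Hh as ->.
  destruct t as [|y t]; auto. exfalso.
  inversion Hd; subst. apply H1. rewrite last_cons_cons in Hl.
  assert (Hi : In (last (y :: t) a) (y :: t)) by (apply last_in; discriminate).
  rewrite Hl in Hi. exact Hi.
Qed.

Lemma path_shape (R : V -> V -> Prop) p a b :
  is_path R p a b -> a <> b -> p = a :: interior p ++ [b].
Proof.
  intros [Hh [Hl [Hd Hc]]] Hab.
  destruct p as [|x t]; [discriminate|]. simpl in Hh. injection Hh as ->.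
  destruct t as [|y t]; [simpl in Hl; congruence|].
  unfold interior. simpl tl. f_equal.
  rewrite last_cons_cons in Hl. rewrite <- Hl.
  apply app_removelast_last. discriminate.
Qed.

Lemma path_interior_in (R : V -> V -> Prop) p a b y :
  is_path R p a b -> In y (interior p) -> In y p /\ y <> a /\ y <> b.
Proof.
  intros Hp Hy.
  destruct (classic (a = b)) as [Hab|Hab].
  - subst. rewrite (path_same_interior Hp) in Hy. destruct Hy.
  - pose proof (path_shape Hp Hab) as E.
    destruct Hp as [_ [_ [Hd _]]]. rewrite E in Hd. rewrite E.
    inversion Hd; subst.
    assert (Hb : ~ In b (interior p)).
    { intro Hb. apply (NoDup_remove_2 _ _ _ H2). rewrite app_nil_r. auto. }
    split; [right; apply in_or_app; left; auto|].
    split; intro; subst; [apply H1; apply in_or_app; left; auto| auto].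
Qed.

Lemma interior_shape (a : V) m b : interior (a :: m ++ [b]) = m.
Proof. unfold interior. simpl. apply removelast_last. Qed.

Lemma interior_rev (l : list V) : interior (rev l) = rev (interior l).
Proof.
  destruct l as [|a l]; auto.
  destruct l as [|b l] using rev_ind; auto.
  replace (rev (a :: l ++ [b])) with (b :: rev l ++ [a]).
  2:{ simpl. rewrite rev_app_distr. reflexivity. }
  rewrite !interior_shape. reflexivity.
Qed.

Lemma path_rev (R : V -> V -> Prop) p a b :
  (forall x y, R x y -> R y x) -> is_path R p a b -> is_path R (rev p) b a.
Proof.
  intros Hs Hp. pose proof (path_walk Hp) as Hw.
  destruct (walk_rev Hs Hw) as [H1 [H2 H3]].
  destruct Hp as [_ [_ [Hd _]]]. repeat split; auto. apply NoDup_rev; auto.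
Qed.

Lemma path_prefix (R : V -> V -> Prop) x m c k y :
  is_path R (x :: m ++ c :: k) x y -> is_path R (x :: m ++ [c]) x c.
Proof.
  intros [Hh [Hl [Hd Hc]]]. repeat split.
  - rewrite app_comm_cons. apply last_last.
  - rewrite app_comm_cons in Hd |- *. change (c :: k) with ([c] ++ k) in Hd.
    rewrite app_assoc in Hd. eapply NoDup_app_remove_r; eauto.
  - rewrite app_comm_cons in Hc |- *. apply chain_app in Hc. tauto.
Qed.

Lemma interior_prefix (x : V) m c k : incl m (interior (x :: m ++ c :: k)).
Proof.
  unfold interior. simpl. rewrite removelast_app by discriminate.
  intros u Hu. apply in_or_app; auto.
Qed.

End Paths.

Lemma adj_minus_sym (G : graph) E (x y : G) : adj_minus G E x y -> adj_minus G E y x.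
Proof. intros [H1 [H2 H3]]. repeat split; auto. apply adj_sym; auto. Qed.

Lemma adj_minus_adj (G : graph) E (x y : G) : adj_minus G E x y -> adj G x y.
Proof. intros [H _]; auto. Qed.

Lemma adj_minus_mono (G : graph) E E' (x y : G) : incl E E' -> adj_minus G E' x y -> adj_minus G E x y.
Proof. intros Hi [H1 [H2 H3]]. repeat split; auto. Qed.

Lemma Pi_sep (G : graph) : ~ inf_indep_paths G -> forall u v : G, u <> v ->
  exists S : list G, forall p, is_path (adj G) p u v -> interior p <> [] ->
    exists s, In s (interior p) /\ In s S.
Proof.
  intros HPi u v Huv. apply NNPP; intro HS.
  assert (H : forall Sx : list G, exists p, is_path (adj G) p u v /\ interior p <> [] /\
            forall s, In s (interior p) -> ~ In s Sx).
  { intros Sx. apply NNPP; intro H. apply HS. exists Sx. intros p Hp Hne.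
    apply NNPP; intro Hn. apply H. exists p. split; [auto|split; [auto|]]. intros s Hs Hs'. apply Hn. eauto. }
  pose (F := fun Sx => proj1_sig (constructive_indefinite_description _ (H Sx))).
  assert (HF : forall Sx, is_path (adj G) (F Sx) u v /\ interior (F Sx) <> [] /\
                 forall s, In s (interior (F Sx)) -> ~ In s Sx).
  { intros Sx. unfold F. destruct (constructive_indefinite_description _ (H Sx)) as [p Hp]. exact Hp. }
  pose (hist := fix hist (n : nat) : list G := match n with 0 => [] | S n => hist n ++ interior (F (hist n)) end).
  assert (Hmono : forall m k, incl (interior (F (hist m))) (hist (S m + k))).
  { intros m k. induction k as [|k IH].
    - rewrite Nat.add_0_r. simpl. intros x Hx. apply in_or_app; auto.
    - rewrite Nat.add_succ_r. simpl. intros x Hx. apply in_or_app. left. apply IH; auto. }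
  assert (Hlt : forall m n w, m < n -> In w (interior (F (hist m))) -> In w (interior (F (hist n))) -> False).
  { intros m n w Hmn H1 H2. destruct (HF (hist n)) as [_ [_ H3]].
    apply (H3 w H2). replace n with (S m + (n - S m)) by lia. apply Hmono; auto. }
  apply HPi. exists u, v, (fun n => F (hist n)). split; auto. split; [intros n; apply HF|]. split.
  - intros n m E. destruct (Nat.lt_total n m) as [Hnm|[Hnm|Hnm]]; auto; exfalso.
    + destruct (HF (hist n)) as [_ [Hne _]].
      destruct (interior (F (hist n))) as [|w l] eqn:Ei; [congruence|].
      apply (Hlt n m w Hnm); [rewrite Ei; left; auto|]. rewrite <- E, Ei. left; auto.
    + destruct (HF (hist m)) as [_ [Hne _]].
      destruct (interior (F (hist m))) as [|w l] eqn:Ei; [congruence|].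
      apply (Hlt m n w Hnm); [rewrite Ei; left; auto|]. rewrite E, Ei. left; auto.
  - intros n m w Hnm H1 H2. destruct (Nat.lt_total n m) as [Hl|[Hl|Hl]].
    + eapply Hlt; eauto.
    + contradiction.
    + eapply Hlt; eauto.
Qed.

Lemma combine_lists {X Y : Type} (L : list X) (P : X -> list Y -> Prop) :
  (forall x S S', incl S S' -> P x S -> P x S') ->
  (forall x, In x L -> exists S, P x S) -> exists S, forall x, In x L -> P x S.
Proof.
  intros Hm. induction L as [|x L IH]; intros H.
  - exists []. intros _ [].
  - destruct (H x (or_introl eq_refl)) as [S1 H1].
    destruct IH as [S2 H2]; [intros y Hy; apply H; right; auto|].
    exists (S1 ++ S2). intros y [Hy|Hy].
    + subst. eapply Hm; [|exact H1]. intros u Hu; apply in_or_app; auto.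
    + eapply Hm; [|apply H2; auto]. intros u Hu; apply in_or_app; auto.
Qed.

Definition good (G : graph) (A B : list G) (D : G -> Prop) : Prop :=
  forall E : list (G * G), exists p a b, In a A /\ In b B /\
    is_path (adj_minus G E) p a b /\ Forall D (interior p).

Lemma good_sym (G : graph) A B D : good G A B D -> good G B A D.
Proof.
  intros H E. destruct (H E) as [p [a [b [Ha [Hb [Hp Hf]]]]]].
  exists (rev p), b, a. split; [auto|split; [auto|split]].
  - apply path_rev; auto. apply adj_minus_sym.
  - rewrite interior_rev. apply Forall_rev. auto.
Qed.

Lemma good_mono (G : graph) A B D A' B' D' :
  incl A A' -> incl B B' -> (forall x, D x -> D' x) -> good G A B D -> good G A' B' D'.
Proof.
  intros HA HB HD H E. destruct (H E) as [p [a [b [Ha [Hb [Hp Hf]]]]]].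
  exists p, a, b. split; [auto|split; [auto|split; [auto|]]]. eapply Forall_impl; eauto.
Qed.

Lemma good_trunc (G : graph) A B D B' :
  good G A B D -> incl B B' -> (forall x, In x B' -> ~ In x A) ->
  good G A B' (fun x => D x /\ ~ In x B').
Proof.
  intros H HB HA E. destruct (H E) as [p [a [b [Ha [Hb [Hp Hf]]]]]].
  destruct (first_split (fun x => In x B') p) as [l1 [c [l2 [Ep [Hc Hl1]]]]].
  { exists b. split; auto.
    assert (Hne : p <> []) by (intro E0; subst p; destruct Hp as [Hh _]; discriminate).
    destruct Hp as [_ [Hl _]]. rewrite <- Hl. apply last_in. auto. }
  destruct l1 as [|a' m].
  - exfalso. destruct Hp as [Hh _]. rewrite Ep in Hh. simpl in Hh. injection Hh as ->.
    apply (HA a); auto.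
  - assert (a' = a) by (destruct Hp as [Hh _]; rewrite Ep in Hh; simpl in Hh; congruence). subst a'.
    rewrite Ep in Hp, Hf. rewrite <- app_comm_cons in Hp, Hf.
    exists (a :: m ++ [c]), a, c. split; [auto|split; [auto|split]].
    + eapply path_prefix; eauto.
    + rewrite interior_shape. apply Forall_forall. intros y Hy. split.
      * rewrite Forall_forall in Hf. apply Hf. apply interior_prefix; auto.
      * inversion Hl1; subst. rewrite Forall_forall in H3. apply H3; auto.
Qed.

End MP2.
Import MP2.

Module MP3.
Import ListNotations.
Set Implicit Arguments.

Lemma path_mono {V : Type} (R R' : V -> V -> Prop) p a b :
  (forall x y, R x y -> R' x y) -> is_path R p a b -> is_path R' p a b.
Proof. intros H [H1 [H2 [H3 H4]]]. repeat split; auto. eapply chain_mono; eauto. Qed.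

Lemma chain_app_l {V : Type} (R : V -> V -> Prop) l1 l2 : chain R (l1 ++ l2) -> chain R l1.
Proof.
  induction l1 as [|x l1 IH]; intros H; simpl; auto.
  destruct l1 as [|y l1]; auto. simpl in H. destruct H as [H1 H2]. split; auto.
Qed.

Lemma chain_interior {V : Type} (R : V -> V -> Prop) p : chain R p -> chain R (interior p).
Proof.
  intros H. unfold interior.
  destruct p as [|x t]; simpl; auto. apply chain_cons in H.
  destruct t as [|y t] using rev_ind; simpl; auto.
  rewrite removelast_last. eapply chain_app_l; eauto.
Qed.

Lemma chain_with_tl {V : Type} (R : V -> V -> Prop) (P : V -> Prop) w :
  chain R w -> Forall P (tl w) -> chain (fun y z => R y z /\ P z) w.
Proof.
  induction w as [|x w IH]; simpl; auto.
  destruct w as [|y w]; simpl; auto. intros [H1 H2] Hf. inversion Hf; subst.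
  split; auto. apply IH; auto.
Qed.

Lemma in_hd_tl {V : Type} (w : list V) c y : hd_error w = Some c -> In y w -> y = c \/ In y (tl w).
Proof. destruct w; simpl; intros H; [discriminate|]. injection H as ->. intros [H|H]; auto. Qed.

Section Core.
Variable G : graph.
Hypothesis HPi : ~ inf_indep_paths G.

Lemma sep_AB (A B : list G) : (forall x, In x A -> ~ In x B) ->
  exists S, forall p a b, In a A -> In b B -> is_path (adj G) p a b -> interior p <> [] ->
     exists s, In s (interior p) /\ In s S.
Proof.
  intros Hd.
  destruct (combine_lists (list_prod A B)
     (fun ab S => forall p, is_path (adj G) p (fst ab) (snd ab) -> interior p <> [] ->
        exists s, In s (interior p) /\ In s S)) as [S HS].
  - intros x S S' Hi H p Hp Hne. destruct (H p Hp Hne) as [s [H1 H2]]. eauto.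
  - intros [a b] Hab. apply in_prod_iff in Hab. destruct Hab as [Ha Hb].
    apply Pi_sep; auto. simpl. intro E; subst. apply (Hd b); auto.
  - exists S. intros p a b Ha Hb Hp Hne. apply (HS (a,b)); auto. apply in_prod; auto.
Qed.

Definition fsplit (S : list G) (s : G) (l : list G) :=
  exists l1 l2, l = l1 ++ s :: l2 /\ Forall (fun y => ~ In y S) l1.
Definition lsplit (S : list G) (t : G) (l : list G) :=
  exists l1 l2, l = l1 ++ t :: l2 /\ Forall (fun y => ~ In y S) l2.

Definition separates (A B S : list G) : Prop :=
  forall p a b, In a A -> In b B -> is_path (adj G) p a b -> interior p <> [] ->
     exists s, In s (interior p) /\ In s S.

Lemma st_lemma A B D S : (forall x, In x A -> ~ In x B) -> good G A B D -> separates A B S ->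
  exists s t, forall E, exists p a b, In a A /\ In b B /\ is_path (adj_minus G E) p a b /\
     Forall D (interior p) /\ fsplit S s (interior p) /\ lsplit S t (interior p).
Proof.
  intros Hd Hg HS. apply NNPP; intro H.
  set (Q := fun (st : G * G) E => exists p a b, In a A /\ In b B /\ is_path (adj_minus G E) p a b /\
     Forall D (interior p) /\ fsplit S (fst st) (interior p) /\ lsplit S (snd st) (interior p)).
  destruct (combine_lists (list_prod S S) (fun st E => ~ Q st E)) as [E0 HE0].
  - intros st E E' Hi HnQ [p [a [b [Ha [Hb [Hp Hr]]]]]]. apply HnQ. exists p, a, b.
    split; [auto|split; [auto|split; [|auto]]].
    eapply path_mono; [|exact Hp]. intros x y. apply adj_minus_mono; auto.
  - intros [s t] _. apply NNPP; intro H'. apply H. exists s, t. intro E.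
    apply NNPP; intro HQ. apply H'. exists E. exact HQ.
  - destruct (Hg (E0 ++ list_prod A B)) as [p [a [b [Ha [Hb [Hp Hf]]]]]].
    assert (Hab : a <> b) by (intro; subst; eapply Hd; eauto).
    assert (Hne : interior p <> []).
    { intro He. pose proof (path_shape Hp Hab) as Ep. rewrite He in Ep. simpl in Ep.
      destruct Hp as [_ [_ [_ Hc]]]. rewrite Ep in Hc. simpl in Hc.
      destruct Hc as [[_ [Hn _]] _]. apply Hn. apply in_or_app. right. apply in_prod; auto. }
    assert (Hpa : is_path (adj G) p a b) by (eapply path_mono; [|exact Hp]; intros x y; apply adj_minus_adj).
    destruct (HS p a b Ha Hb Hpa Hne) as [s' [Hs1 Hs2]].
    destruct (first_split (fun y => In y S) (interior p)) as [l1 [s [l2 [E1 [Hs Hl1]]]]]; [eauto|].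
    destruct (last_split (fun y => In y S) (interior p)) as [l3 [t [l4 [E2 [Ht Hl4]]]]]; [eauto|].
    apply (HE0 (s, t)); [apply in_prod; auto|].
    exists p, a, b. split; [auto|split; [auto|split; [|split; [auto|split]]]].
    + eapply path_mono; [|exact Hp]. intros x y. apply adj_minus_mono. intros u Hu. apply in_or_app; auto.
    + exists l1, l2. auto.
    + exists l3, l4. auto.
Qed.

Definition Rset (X : list G) (D : G -> Prop) (S : list G) (x : G) : Prop :=
  D x /\ ~ In x S /\ exists w c, In c X /\ walk (adj G) w c x /\ Forall (fun y => D y /\ ~ In y S) (tl w).

Lemma prefix_good (A C : list G) D S s :
  (forall x, D x -> ~ In x A) -> In s C -> (forall x, In x C -> D x) ->
  (forall E, exists p a b, In a A /\ is_path (adj_minus G E) p a b /\ Forall D (interior p) /\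
      fsplit S s (interior p)) ->
  good G A C (fun x => Rset A D S x /\ ~ In x C).
Proof.
  intros HDA Hs HC H E. destruct (H E) as [p [a [b [Ha [Hp [Hf [l1 [l2 [Ei Hl1]]]]]]]]].
  assert (Hab : a <> b).
  { intro; subst b. rewrite (path_same_interior Hp) in Ei. destruct l1; discriminate. }
  pose proof (path_shape Hp Hab) as Ep. rewrite Ei in Ep.
  rewrite <- app_assoc in Ep. simpl in Ep.
  assert (Hp1 : is_path (adj_minus G E) (a :: l1 ++ [s]) a s).
  { rewrite Ep in Hp. eapply path_prefix; eauto. }
  destruct (first_split (fun x => In x C) (a :: l1 ++ [s])) as [k1 [c [k2 [Ek [Hc Hk1]]]]].
  { exists s. split; auto. right. apply in_or_app. right. left. auto. }
  destruct k1 as [|a' m].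
  - exfalso. simpl in Ek. injection Ek as Eac _. subst c. apply (HDA a (HC a Hc)); auto.
  - simpl in Ek. injection Ek as <- Ek.
    exists (a :: m ++ [c]), a, c. split; [auto|split; [auto|split]].
    + rewrite Ek in Hp1. eapply path_prefix; eauto.
    + rewrite interior_shape. apply Forall_forall. intros y Hy.
      assert (HyC : ~ In y C).
      { inversion Hk1; subst. rewrite Forall_forall in H3. apply H3; auto. }
      assert (Hyl1 : In y l1).
      { assert (Hy' : In y (l1 ++ [s])) by (rewrite Ek; apply in_or_app; auto).
        apply in_app_or in Hy'. destruct Hy' as [H0|[H0|[]]]; auto. subst; contradiction. }
      destruct (in_split _ _ Hyl1) as [u1 [u2 Eu]].
      split; [|auto].
      assert (HDy : forall z, In z l1 -> D z /\ ~ In z S).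
      { intros z Hz. rewrite Forall_forall in Hf, Hl1. split; [apply Hf; rewrite Ei; apply in_or_app; auto | apply Hl1; auto]. }
      split; [apply HDy; auto|]. split; [apply HDy; auto|].
      exists (a :: u1 ++ [y]), a. split; auto. split.
      * apply (walk_mono (R:=adj_minus G E)); [intros x1 y1; apply adj_minus_adj|].
        destruct Hp as [_ [_ [_ Hc']]]. rewrite Ep, Eu in Hc'. rewrite <- app_assoc in Hc'. simpl in Hc'.
        apply (@chain_walk_fwd _ _ [] a u1 y (u2 ++ s :: l2 ++ [b])). simpl. exact Hc'.
      * simpl. apply Forall_forall. intros z Hz. apply HDy. rewrite Eu. apply in_app_or in Hz.
        apply in_or_app. destruct Hz as [Hz|[Hz|[]]]; [left; auto| right; left; auto].
Qed.

Lemma Rset_disjoint A B D S : (forall x, D x -> ~ In x A /\ ~ In x B) -> (forall x, In x A -> ~ In x B) ->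
  separates A B S -> forall x, Rset A D S x -> Rset B D S x -> False.
Proof.
  intros HD Hd HS x [Dx [Sx [w1 [a [Ha [Hw1 Hf1]]]]]] [_ [_ [w2 [b [Hb [Hw2 Hf2]]]]]].
  set (R' := fun y z => adj G y z /\ (D y \/ D z)).
  assert (HR's : forall y z, R' y z -> R' z y).
  { intros y z [H1 H2]; split; [apply adj_sym; auto| tauto]. }
  assert (Hw1' : walk R' w1 a x).
  { destruct Hw1 as [H1 [H2 H3]]. repeat split; auto.
    eapply chain_mono; [|apply chain_with_tl; [exact H3|exact Hf1]]. intros y z [H4 [H5 _]]. split; auto. }
  assert (Hw2' : walk R' w2 b x).
  { destruct Hw2 as [H1 [H2 H3]]. repeat split; auto.
    eapply chain_mono; [|apply chain_with_tl; [exact H3|exact Hf2]]. intros y z [H4 [H5 _]]. split; auto. }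
  pose proof (walk_app Hw1' (walk_rev HR's Hw2')) as Hw.
  destruct (walk_to_path Hw) as [p [Hp Hi]].
  assert (Hab : a <> b) by (intro; subst; eapply Hd; eauto).
  assert (Hne : interior p <> []).
  { intro He. pose proof (path_shape Hp Hab) as Ep. rewrite He in Ep. simpl in Ep.
    destruct Hp as [_ [_ [_ Hc]]]. rewrite Ep in Hc. simpl in Hc. destruct Hc as [[_ [Hda|Hdb]] _].
    - apply (proj1 (HD a Hda)); auto.
    - apply (proj2 (HD b Hdb)); auto. }
  assert (Hpa : is_path (adj G) p a b) by (eapply path_mono; [|exact Hp]; intros y z [H _]; auto).
  destruct (HS p a b Ha Hb Hpa Hne) as [s [Hs1 Hs2]].
  destruct (path_interior_in s Hp Hs1) as [Hsp [Hsa Hsb]].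
  apply Hi in Hsp. apply in_app_or in Hsp. destruct Hsp as [Hsp|Hsp].
  - destruct (@in_hd_tl _ w1 a s (proj1 Hw1) Hsp) as [E|E]; [contradiction|].
    rewrite Forall_forall in Hf1. apply (proj2 (Hf1 s E)); auto.
  - destruct (rev w2) as [|r w3] eqn:Er; [destruct Hsp|]. simpl in Hsp.
    assert (Hs2' : In s w2) by (apply in_rev; rewrite Er; right; auto).
    destruct (@in_hd_tl _ w2 b s (proj1 Hw2) Hs2') as [E|E]; [contradiction|].
    rewrite Forall_forall in Hf2. apply (proj2 (Hf2 s E)); auto.
Qed.

Lemma attach_left A C B D1 D2 :
  (forall x, In x C -> ~ In x A) -> (forall x, D1 x -> ~ In x A /\ ~ In x C) ->
  (forall x, D2 x -> ~ In x C) -> (forall x, D1 x -> ~ D2 x) ->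
  connected_in (adj G) (fun x => In x C) -> good G A C D1 -> good G C B D2 ->
  exists C', incl C C' /\ (forall x, In x C' -> In x C \/ D1 x) /\
    connected_in (adj G) (fun x => In x C') /\ (exists a c, In a A /\ In c C' /\ adj G a c) /\
    good G A C' (fun x => D1 x /\ ~ In x C') /\ good G C' B (fun x => D2 x /\ ~ In x C').
Proof.
  intros HCA HD1 HD2 H12 Hcon Hg1 Hg2.
  destruct (Hg1 []) as [q [a [c [Ha [Hc [Hq Hf]]]]]].
  assert (Hac : a <> c) by (intro; subst; eapply HCA; eauto).
  pose proof (path_shape Hq Hac) as Eq.
  assert (HT : forall x, In x (interior q ++ [c]) -> In x C \/ D1 x).
  { intros x Hx. apply in_app_or in Hx. destruct Hx as [Hx|[Hx|[]]].
    - right. rewrite Forall_forall in Hf. auto.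
    - left. subst. auto. }
  exists (C ++ (interior q ++ [c])).
  assert (HC' : forall x, In x (C ++ (interior q ++ [c])) -> In x C \/ D1 x).
  { intros x Hx. apply in_app_or in Hx. destruct Hx; auto. }
  assert (Hch : chain (adj G) (a :: interior q ++ [c])).
  { destruct Hq as [_ [_ [_ Hch]]]. rewrite Eq in Hch. eapply chain_mono; [|exact Hch].
    intros x y; apply adj_minus_adj. }
  split; [intros x Hx; apply in_or_app; auto|].
  split; [exact HC'|].
  split.
  - apply (connected_ext (A := fun x => In x C \/ In x (interior q ++ [c])) (fun x => In x (C ++ (interior q ++ [c])))).
    { intros x. split; intro Hx; [apply in_or_app; tauto| apply in_app_or in Hx; tauto]. }
    eapply connected_union with (z := c); eauto.
    + intros x y; apply adj_sym.
    + apply chain_connected; [intros x y; apply adj_sym|]. eapply chain_cons; eauto.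
    + apply in_or_app; right; left; auto.
  - split.
    + destruct (interior q ++ [c]) as [|h T'] eqn:ET.
      { destruct (interior q); discriminate. }
      exists a, h. split; auto. split; [apply in_or_app; right; left; auto|].
      simpl in Hch. tauto.
    + split.
      * apply good_trunc with (B := C); auto.
        -- intros x Hx; apply in_or_app; auto.
        -- intros x Hx. destruct (HC' x Hx) as [H|H]; [apply HCA; auto| apply HD1; auto].
      * eapply good_mono; [ | | | exact Hg2].
        -- intros x Hx; apply in_or_app; auto.
        -- apply incl_refl.
        -- intros x Hx. split; auto. intro Hin. destruct (HC' x Hin) as [H|H].
           ++ eapply HD2; eauto.
           ++ eapply H12; eauto.
Qed.

End Core.

End MP3.
Import MP3.

Module MP4.
Import ListNotations.
Set Implicit Arguments.

Section Core2.
Variable G : graph.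
Hypothesis HPi : ~ inf_indep_paths G.

Definition core_spec (A B : list G) (D : G -> Prop) (C : list G) (D1 D2 : G -> Prop) : Prop :=
  C <> [] /\ connected_in (adj G) (fun x => In x C) /\ (forall x, In x C -> D x) /\
  (exists a c, In a A /\ In c C /\ adj G a c) /\ (exists c b, In c C /\ In b B /\ adj G c b) /\
  (forall x, D1 x -> D x /\ ~ In x C) /\ (forall x, D2 x -> D x /\ ~ In x C) /\
  (forall x, D1 x -> ~ D2 x) /\ good G A C D1 /\ good G C B D2.

Lemma core A B D :
  (forall x, In x A -> ~ In x B) -> (forall x, D x -> ~ In x A /\ ~ In x B) -> good G A B D ->
  exists C D1 D2, core_spec A B D C D1 D2.
Proof.
  intros Hd HD Hg.
  destruct (sep_AB HPi A B Hd) as [S HS].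
  destruct (st_lemma Hd Hg HS) as [s [t Hst]].
  destruct (Hst []) as [p0 [a0 [b0 [Ha0 [Hb0 [Hp0 [Hf0 [Hs0 Ht0]]]]]]]].
  set (C0 := interior p0).
  assert (HC0D : forall x, In x C0 -> D x) by (rewrite Forall_forall in Hf0; auto).
  assert (HsC : In s C0) by (destruct Hs0 as [l1 [l2 [E _]]]; unfold C0; rewrite E; apply in_or_app; right; left; auto).
  assert (HC0con : connected_in (adj G) (fun x => In x C0)).
  { apply chain_connected; [intros x y; apply adj_sym|]. unfold C0. apply chain_interior.
    destruct Hp0 as [_ [_ [_ Hc]]]. eapply chain_mono; [|exact Hc]. intros x y; apply adj_minus_adj. }
  set (D1 := fun x => Rset G A D S x /\ ~ In x C0).
  set (D2 := fun x => Rset G B D S x /\ ~ In x C0).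
  assert (Hg1 : good G A C0 D1).
  { apply (prefix_good (G:=G) A C0) with (s := s); auto.
    - intros x Hx; apply HD; auto.
    - intros E. destruct (Hst E) as [p [a [b [Ha [Hb [Hp [Hf [Hs Ht]]]]]]]]. exists p, a, b. auto. }
  assert (Hg2 : good G C0 B D2).
  { apply good_sym. apply (prefix_good (G:=G) B C0) with (s := t); auto.
    - intros x Hx; apply HD; auto.
    - destruct Ht0 as [l1 [l2 [E _]]]; unfold C0; rewrite E; apply in_or_app; right; left; auto.
    - intros E. destruct (Hst E) as [p [a [b [Ha [Hb [Hp [Hf [Hs [l3 [l4 [E4 Hl4]]]]]]]]]]].
      exists (rev p), b, a. split; [auto|split; [|split]].
      + apply path_rev; auto. intros x y; apply adj_minus_sym.
      + rewrite interior_rev. apply Forall_rev. auto.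
      + exists (rev l4), (rev l3). rewrite interior_rev, E4. rewrite rev_app_distr. simpl.
        rewrite <- app_assoc. split; auto. apply Forall_rev; auto. }
  assert (H12 : forall x, D1 x -> ~ D2 x).
  { intros x [H1 _] [H2 _]. eapply Rset_disjoint; eauto. }
  destruct (@attach_left G A C0 B D1 D2) as [C1 [Hi1 [HC1 [Hcon1 [Hadj1 [Hg1' Hg2']]]]]]; auto.
  { intros x Hx Hx'. apply (proj1 (HD x (HC0D x Hx))); auto. }
  { intros x [[Dx _] Hx]. split; [apply HD; auto| auto]. }
  { intros x [_ Hx]; auto. }
  destruct (@attach_left G B C1 A (fun x => D2 x /\ ~ In x C1) (fun x => D1 x /\ ~ In x C1))
    as [C2 [Hi2 [HC2 [Hcon2 [Hadj2 [Hg3 Hg4]]]]]].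
  { intros x Hx Hx'. destruct (HC1 x Hx) as [H|H].
    - apply (proj2 (HD x (HC0D x H))); auto.
    - destruct H as [[Dx _] _]. apply (proj2 (HD x Dx)); auto. }
  { intros x [[[Dx _] _] Hx]. split; [apply HD; auto | auto]. }
  { intros x [_ Hx]; auto. }
  { intros x [H1 _] [H2 _]. eapply H12; eauto. }
  { auto. }
  { apply good_sym; auto. }
  { apply good_sym; auto. }
  assert (HC2D : forall x, In x C2 -> D x).
  { intros x Hx. destruct (HC2 x Hx) as [H|[[[Dx _] _] _]]; auto.
    destruct (HC1 x H) as [H'|[[Dx _] _]]; auto. }
  exists C2, (fun x => (D1 x /\ ~ In x C1) /\ ~ In x C2), (fun x => (D2 x /\ ~ In x C1) /\ ~ In x C2).
  split; [|split; [auto|split; [auto|split; [|split; [|split; [|split; [|split; [|split]]]]]]]].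
  - intro E. apply (Hi2 s) in HsC' || idtac. assert (Hs2 : In s C2) by (apply Hi2; apply Hi1; auto).
    rewrite E in Hs2; destruct Hs2.
  - destruct Hadj1 as [a [c [Ha [Hc Hac]]]]. exists a, c. split; auto.
  - destruct Hadj2 as [b [c [Hb [Hc Hbc]]]]. exists c, b. split; [auto|split; [auto|]]. apply adj_sym; auto.
  - intros x [[[[Dx _] _] _] Hx]. auto.
  - intros x [[[[Dx _] _] _] Hx]. auto.
  - intros x [[H1 _] _] [[H2 _] _]. eapply H12; eauto.
  - apply good_sym; auto.
  - apply good_sym; auto.
Qed.

End Core2.

End MP4.
Import MP4.

Module MP5.
Import ListNotations.
Open Scope Z_scope.

Definition vec := (Z * Z)%type.
Definition det (u v : vec) : Z := fst u * snd v - snd u * fst v.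
Definition vadd (u v : vec) : vec := (fst u + fst v, snd u + snd v).
Definition vscale (k : Z) (u : vec) : vec := (k * fst u, k * snd u).
Definition ch (b : bool) (e : vec * vec) : vec * vec :=
  if b then (vadd (fst e) (snd e), snd e) else (fst e, vadd (fst e) (snd e)).
Fixpoint ends_from (e : vec * vec) (s : list bool) : vec * vec :=
  match s with [] => e | b :: s' => ends_from (ch b e) s' end.
Definition root : vec * vec := ((0,1), (1,0)).
Definition med (e : vec * vec) : vec := vadd (fst e) (snd e).
Definition inv (e : vec * vec) : Prop :=
  0 <= fst (fst e) /\ 1 <= snd (fst e) /\ 0 <= fst (snd e) /\ 0 <= snd (snd e) /\
  (snd (snd e) = 0 -> fst (snd e) = 1) /\ det (fst e) (snd e) = -1.

Lemma inv_root : inv root.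
Proof. unfold inv, root, det; simpl; lia. Qed.

Lemma inv_ch b e : inv e -> inv (ch b e).
Proof.
  destruct e as [[l1 l2] [r1 r2]]. unfold inv, ch, det, vadd; destruct b; simpl; intros; lia.
Qed.

Lemma inv_ends e s : inv e -> inv (ends_from e s).
Proof. revert e; induction s as [|b s IH]; simpl; auto. intros e H; apply IH, inv_ch; auto. Qed.

Lemma med_pos e : inv e -> 1 <= fst (med e) /\ 1 <= snd (med e).
Proof.
  destruct e as [[l1 l2] [r1 r2]]. unfold inv, med, det, vadd; simpl. intros. nia.
Qed.

Lemma ends_app e s t : ends_from e (s ++ t) = ends_from (ends_from e s) t.
Proof. revert e; induction s; simpl; auto. Qed.

Lemma ends_linear (f : vec -> vec) e s :
  (forall u v, f (vadd u v) = vadd (f u) (f v)) ->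
  ends_from (f (fst e), f (snd e)) s = (f (fst (ends_from e s)), f (snd (ends_from e s))).
Proof.
  intros Hf. revert e; induction s as [|b s IH]; intros e; simpl; auto.
  rewrite <- IH. f_equal. destruct b; simpl; rewrite Hf; reflexivity.
Qed.

Definition Tm (v : vec) : vec := (fst v + snd v, snd v).
Definition Sm (v : vec) : vec := (fst v, fst v + snd v).

Lemma to_nat_lt a b : 0 <= a -> a < b -> (Z.to_nat a < Z.to_nat b)%nat.
Proof. intros; apply Z2Nat.inj_lt; lia. Qed.

Lemma exists_sigma_aux n : forall p q, (Z.to_nat (p + q) <= n)%nat -> 1 <= p -> 1 <= q -> Z.gcd p q = 1 ->
  exists s, med (ends_from root s) = (p, q).
Proof.
  induction n as [|n IH]; intros p q Hn Hp Hq Hg; [lia|].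
  destruct (Z.lt_total p q) as [Hpq|[Hpq|Hpq]].
  - destruct (IH p (q - p)) as [s Hs]; try lia.
    { rewrite Z.gcd_sub_diag_r. auto. }
    exists (false :: s).
    change (med (ends_from (Sm (fst root), Sm (snd root)) s) = (p, q)).
    rewrite ends_linear by (intros [] []; unfold Sm, vadd; simpl; f_equal; lia).
    destruct (ends_from root s) as [[a b] [c d]]. unfold med, vadd, Sm in *; simpl in *.
    injection Hs; intros; f_equal; lia.
  - subst q. rewrite Z.gcd_diag in Hg. exists []. simpl. unfold med, vadd; simpl. f_equal; lia.
  - destruct (IH (p - q) q) as [s Hs]; try lia.
    { rewrite Z.gcd_comm. replace (p - q) with (p - q) by lia. rewrite Z.gcd_sub_diag_r. rewrite Z.gcd_comm. auto. }
    exists (true :: s).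
    change (med (ends_from (Tm (fst root), Tm (snd root)) s) = (p, q)).
    rewrite ends_linear by (intros [] []; unfold Tm, vadd; simpl; f_equal; lia).
    destruct (ends_from root s) as [[a b] [c d]]. unfold med, vadd, Tm in *; simpl in *.
    injection Hs; intros; f_equal; lia.
Qed.

Lemma exists_sigma p q : 1 <= p -> 1 <= q -> Z.gcd p q = 1 -> exists s, med (ends_from root s) = (p, q).
Proof. intros; eapply exists_sigma_aux; eauto. Qed.

(* coordinates w.r.t. a basis (L,R) *)
Definition cL (e : vec * vec) (v : vec) : Z := - det v (snd e).
Definition cR (e : vec * vec) (v : vec) : Z := - det (fst e) v.

Lemma det_coord (e : vec * vec) v w :
  det v w * det (fst e) (snd e) = cL e v * cR e w - cR e v * cL e w.
Proof. destruct e as [[a b] [c d]], v as [x y], w as [z t]. unfold cL, cR, det; simpl. ring. Qed.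

Lemma cL_add e u v : cL e (vadd u v) = cL e u + cL e v.
Proof. destruct e as [[a b] [c d]], u, v. unfold cL, det, vadd; simpl. ring. Qed.
Lemma cR_add e u v : cR e (vadd u v) = cR e u + cR e v.
Proof. destruct e as [[a b] [c d]], u, v. unfold cR, det, vadd; simpl. ring. Qed.

Lemma ends_closed (P : vec -> Prop) e s :
  (forall u v, P u -> P v -> P (vadd u v)) -> P (fst e) -> P (snd e) ->
  P (fst (ends_from e s)) /\ P (snd (ends_from e s)).
Proof.
  intros Hc. revert e; induction s as [|b s IH]; intros e H1 H2; simpl; auto.
  apply IH; destruct b; simpl; auto.
Qed.

Lemma left_subtree e s : inv e ->
  cR e (med (ends_from (ch false e) s)) < cL e (med (ends_from (ch false e) s)).
Proof.
  intros He.
  set (P := fun v => cR e v <= cL e v /\ 0 <= cR e v).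
  assert (HP : P (fst (ends_from (ch false e) s)) /\ P (snd (ends_from (ch false e) s))).
  { apply ends_closed.
    - intros u v [H1 H2] [H3 H4]. unfold P. rewrite cL_add, cR_add. lia.
    - destruct e as [[a b] [c d]]. unfold P, inv, cL, cR, ch, det, vadd in *; simpl in *. lia.
    - destruct e as [[a b] [c d]]. unfold P, inv, cL, cR, ch, det, vadd in *; simpl in *. lia. }
  assert (Hi : inv (ends_from (ch false e) s)) by (apply inv_ends, inv_ch; auto).
  destruct (ends_from (ch false e) s) as [L' R'] eqn:E. simpl in HP.
  destruct HP as [[H1 H2] [H3 H4]]. unfold med. simpl. rewrite cL_add, cR_add.
  destruct (Z.eq_dec (cR e L') (cL e L')) as [Ha|Ha]; [|lia].
  destruct (Z.eq_dec (cR e R') (cL e R')) as [Hb|Hb]; [|lia].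
  exfalso. pose proof (det_coord e L' R') as Hd.
  destruct Hi as [_ [_ [_ [_ [_ Hi]]]]]. simpl in Hi. rewrite Hi in Hd.
  destruct He as [_ [_ [_ [_ [_ He]]]]]. rewrite He in Hd. rewrite Ha, Hb in Hd. lia.
Qed.

Lemma right_subtree e s : inv e ->
  cL e (med (ends_from (ch true e) s)) < cR e (med (ends_from (ch true e) s)).
Proof.
  intros He.
  set (P := fun v => cL e v <= cR e v /\ 0 <= cL e v).
  assert (HP : P (fst (ends_from (ch true e) s)) /\ P (snd (ends_from (ch true e) s))).
  { apply ends_closed.
    - intros u v [H1 H2] [H3 H4]. unfold P. rewrite cL_add, cR_add. lia.
    - destruct e as [[a b] [c d]]. unfold P, inv, cL, cR, ch, det, vadd in *; simpl in *. lia.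
    - destruct e as [[a b] [c d]]. unfold P, inv, cL, cR, ch, det, vadd in *; simpl in *. lia. }
  assert (Hi : inv (ends_from (ch true e) s)) by (apply inv_ends, inv_ch; auto).
  destruct (ends_from (ch true e) s) as [L' R'] eqn:E. simpl in HP.
  destruct HP as [[H1 H2] [H3 H4]]. unfold med. simpl. rewrite cL_add, cR_add.
  destruct (Z.eq_dec (cR e L') (cL e L')) as [Ha|Ha]; [|lia].
  destruct (Z.eq_dec (cR e R') (cL e R')) as [Hb|Hb]; [|lia].
  exfalso. pose proof (det_coord e L' R') as Hd.
  destruct Hi as [_ [_ [_ [_ [_ Hi]]]]]. simpl in Hi. rewrite Hi in Hd.
  destruct He as [_ [_ [_ [_ [_ He]]]]]. rewrite He in Hd. rewrite Ha, Hb in Hd. lia.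
Qed.

Lemma node_coord e : inv e -> cL e (med e) = cR e (med e).
Proof.
  destruct e as [[a b] [c d]]. unfold inv, cL, cR, med, det, vadd; simpl. intros. lia.
Qed.

Lemma unique_sigma s1 : forall e s2, inv e -> med (ends_from e s1) = med (ends_from e s2) -> s1 = s2.
Proof.
  induction s1 as [|b1 s1 IH]; intros e s2 He Hm; destruct s2 as [|b2 s2]; auto; simpl in Hm.
  - exfalso. pose proof (node_coord e He) as H0. destruct b2.
    + pose proof (right_subtree e s2 He). rewrite <- Hm in H. lia.
    + pose proof (left_subtree e s2 He). rewrite <- Hm in H. lia.
  - exfalso. pose proof (node_coord e He) as H0. destruct b1.
    + pose proof (right_subtree e s1 He). rewrite Hm in H. lia.
    + pose proof (left_subtree e s1 He). rewrite Hm in H. lia.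
  - destruct b1, b2.
    + f_equal. apply (IH (ch true e)); auto. apply inv_ch; auto.
    + exfalso. pose proof (right_subtree e s1 He). pose proof (left_subtree e s2 He). rewrite Hm in H. lia.
    + exfalso. pose proof (left_subtree e s1 He). pose proof (right_subtree e s2 He). rewrite Hm in H. lia.
    + f_equal. apply (IH (ch false e)); auto. apply inv_ch; auto.
Qed.

Lemma vadd_comm u v : vadd u v = vadd v u.
Proof. destruct u, v; unfold vadd; cbn; f_equal; ring. Qed.

Lemma ends_repeat_true X w k : ends_from (X, w) (repeat true k) = (vadd X (vscale (Z.of_nat k) w), w).
Proof.
  revert X; induction k as [|k IH]; intros X.
  - destruct X, w; unfold vadd, vscale; cbn; f_equal; f_equal; lia.
  - change (ends_from (ch true (X, w)) (repeat true k) = (vadd X (vscale (Z.of_nat (S k)) w), w)).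
    unfold ch; cbn [fst snd]. rewrite IH.
    destruct X, w; unfold vadd, vscale; cbn [fst snd]; rewrite Nat2Z.inj_succ; f_equal; f_equal; ring.
Qed.

Lemma ends_repeat_false Y w k : ends_from (w, Y) (repeat false k) = (w, vadd Y (vscale (Z.of_nat k) w)).
Proof.
  revert Y; induction k as [|k IH]; intros Y.
  - destruct Y, w; unfold vadd, vscale; cbn; f_equal; f_equal; lia.
  - change (ends_from (ch false (w, Y)) (repeat false k) = (w, vadd Y (vscale (Z.of_nat (S k)) w))).
    unfold ch; cbn [fst snd]. rewrite (vadd_comm w Y). rewrite IH.
    destruct Y, w; unfold vadd, vscale; cbn [fst snd]; rewrite Nat2Z.inj_succ; f_equal; f_equal; ring.
Qed.

Lemma nbr_lemma L R v : inv (L, R) -> snd v >= 0 -> v <> (0,0) ->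
  (det (vadd L R) v = 1 \/ det (vadd L R) v = -1) ->
  (exists k : nat, v = vadd L (vscale (Z.of_nat k) (vadd L R))) \/
  (exists k : nat, v = vadd R (vscale (Z.of_nat k) (vadd L R))) \/
  (v = (-1, 0) /\ R = (1, 0)).
Proof.
  destruct L as [a b], R as [c d], v as [x y]. unfold inv, det, vadd, vscale; simpl.
  intros [Ha [Hb [Hc [Hd [HR Hdet]]]]] Hy Hv Hadj.
  set (al := - (x * d - y * c)). set (be := - (a * y - b * x)).
  assert (Ex : x = al * a + be * c) by (unfold al, be; nia).
  assert (Ey : y = al * b + be * d) by (unfold al, be; nia).
  assert (Hab : al - be = 1 \/ al - be = -1) by (unfold al, be in *; nia).
  clearbody al be. subst x y.
  destruct (Z_le_gt_dec 0 al) as [H1|H1]; destruct (Z_le_gt_dec 0 be) as [H2|H2].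
  - destruct Hab as [Hab|Hab].
    + left. exists (Z.to_nat be). rewrite Z2Nat.id by lia. f_equal; nia.
    + right; left. exists (Z.to_nat al). rewrite Z2Nat.id by lia. f_equal; nia.
  - assert (al = 0 /\ be = -1) as [-> ->] by lia.
    right; right. assert (d = 0) by nia. subst d. specialize (HR eq_refl). subst c. split; f_equal; lia.
  - exfalso. assert (al = -1 /\ be = 0) as [-> ->] by lia. lia.
  - exfalso. nia.
Qed.

End MP5.
Import MP5.

Module MP6.
Import ListNotations.
Set Implicit Arguments.

Definition nrm (p : vec) : Prop :=
  Z.gcd (fst p) (snd p) = 1%Z /\ ((0 < snd p)%Z \/ (snd p = 0%Z /\ fst p = 1%Z)).

Lemma fv_nrm (w : farey_vert) : nrm (proj1_sig w).
Proof. destruct w as [p H]. exact H. Qed.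

Lemma fv_inj (a b : farey_vert) : proj1_sig a = proj1_sig b -> a = b.
Proof. destruct a as [p Hp], b as [q Hq]. simpl. intros E. subst. f_equal. apply proof_irrelevance. Qed.

Lemma farey_adj_det (a b : farey_vert) :
  farey_adj a b <-> (det (proj1_sig a) (proj1_sig b) = 1 \/ det (proj1_sig a) (proj1_sig b) = -1)%Z.
Proof. destruct a as [[x y] Ha], b as [[z t] Hb]. unfold farey_adj, det. simpl. tauto. Qed.

Definition negv (v : vec) : vec := (- fst v, snd v)%Z.
Definition rho (v : vec) : vec := if Z.eqb (snd v) 0 then v else negv v.

Lemma classify (w : vec) : nrm w ->
  w = (0,1)%Z \/ w = (1,0)%Z \/ (1 <= fst w /\ 1 <= snd w)%Z \/ (fst w <= -1 /\ 1 <= snd w)%Z.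
Proof.
  destruct w as [p q]. unfold nrm; simpl. intros [Hg [Hq|[Hq Hp]]].
  - destruct (Z.lt_total p 0) as [H|[H|H]].
    + right; right; right; lia.
    + subst p. rewrite Z.gcd_0_l in Hg. left. f_equal. lia.
    + right; right; left; lia.
  - subst. right; left; reflexivity.
Qed.


Lemma vec_eq (u v : vec) : fst u = fst v -> snd u = snd v -> u = v.
Proof. destruct u, v; simpl; intros; subst; auto. Qed.

Lemma nbr_nodes s0 v : (snd v >= 0)%Z -> v <> (0,0)%Z ->
  (det (med (ends_from root s0)) v = 1 \/ det (med (ends_from root s0)) v = -1)%Z ->
  v = fst (ends_from root s0) \/ v = snd (ends_from root s0) \/
  (v = (-1,0)%Z /\ snd (ends_from root s0) = (1,0)%Z) \/
  (exists s', med (ends_from root s') = v /\ snd (ends_from root s') = med (ends_from root s0)) \/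
  (exists s', med (ends_from root s') = v /\ fst (ends_from root s') = med (ends_from root s0)).
Proof.
  intros Hv Hne Hd.
  pose proof (inv_ends root s0 inv_root) as Hi.
  destruct (ends_from root s0) as [L R] eqn:E. unfold med in Hd. simpl in Hd |- *.
  destruct (nbr_lemma L R v Hi Hv Hne Hd) as [[k Hk]|[[k Hk]|Hk]].
  - destruct k as [|k].
    + left. subst v. destruct L; unfold vadd, vscale; simpl; f_equal; lia.
    + right; right; right; left. exists (s0 ++ false :: repeat true k).
      rewrite ends_app, E. cbn [ends_from ch fst snd].
      rewrite ends_repeat_true. unfold med. simpl. split; auto.
      subst v. destruct L as [a b], R as [c d]. unfold vadd, vscale; cbn [fst snd].
      rewrite Nat2Z.inj_succ. f_equal; ring.
  - destruct k as [|k].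
    + right; left. subst v. destruct R; unfold vadd, vscale; simpl; f_equal; lia.
    + right; right; right; right. exists (s0 ++ true :: repeat false k).
      rewrite ends_app, E. cbn [ends_from ch fst snd].
      rewrite ends_repeat_false. unfold med. simpl. split; auto.
      subst v. destruct L as [a b], R as [c d]. unfold vadd, vscale; cbn [fst snd].
      rewrite Nat2Z.inj_succ. f_equal; ring.
  - right; right; left. auto.
Qed.

Section Construction.
Variable G : graph.
Hypothesis HPi : ~ inf_indep_paths G.

Definition st := (list G * list G * (G -> Prop))%type.
Definition stA (s : st) : list G := fst (fst s).
Definition stB (s : st) : list G := snd (fst s).
Definition stD (s : st) : G -> Prop := snd s.
Definition okst (s : st) : Prop :=
  (forall x, In x (stA s) -> ~ In x (stB s)) /\ (forall x, stD s x -> ~ In x (stA s) /\ ~ In x (stB s)) /\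
  good G (stA s) (stB s) (stD s).

Definition outT := (list G * (G -> Prop) * (G -> Prop))%type.

Lemma step_ex (s : st) : exists o : outT, okst s ->
  core_spec G (stA s) (stB s) (stD s) (fst (fst o)) (snd (fst o)) (snd o).
Proof.
  destruct (classic (okst s)) as [H|H].
  - destruct H as [H1 [H2 H3]]. destruct (core HPi H1 H2 H3) as [C [D1 [D2 Hc]]].
    exists (C, D1, D2). intros _. exact Hc.
  - exists ([], fun _ => False, fun _ => False). intro; contradiction.
Qed.

Definition step (s : st) : outT := proj1_sig (constructive_indefinite_description _ (step_ex s)).
Definition Cof (s : st) : list G := fst (fst (step s)).
Definition D1of (s : st) : G -> Prop := snd (fst (step s)).
Definition D2of (s : st) : G -> Prop := snd (step s).

Lemma spec_of (s : st) : okst s -> core_spec G (stA s) (stB s) (stD s) (Cof s) (D1of s) (D2of s).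
Proof.
  unfold Cof, D1of, D2of, step. destruct (constructive_indefinite_description _ (step_ex s)) as [o Ho]. simpl. auto.
Qed.

Definition child (b : bool) (s : st) : st :=
  if b then (Cof s, stB s, D2of s) else (stA s, Cof s, D1of s).

Fixpoint sfrom (s : st) (l : list bool) : st :=
  match l with [] => s | b :: l' => sfrom (child b s) l' end.

Lemma ok_child b s : okst s -> okst (child b s).
Proof.
  intros Hs. destruct (spec_of Hs) as [Hne [Hcon [HCD [HaA [HaB [H1 [H2 [H12 [Hg1 Hg2]]]]]]]]].
  destruct Hs as [Hd [HD Hg]].
  destruct b; unfold okst, child, stA, stB, stD in *; simpl in *.
  - split; [|split; auto].
    + intros x Hx Hx'. apply (proj2 (HD x (HCD x Hx))); auto.
    + intros x Hx. destruct (H2 x Hx) as [Dx Cx]. split; auto. apply HD; auto.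
  - split; [|split; auto].
    + intros x Hx Hx'. apply (proj1 (HD x (HCD x Hx'))); auto.
    + intros x Hx. destruct (H1 x Hx) as [Dx Cx]. split; auto. apply HD; auto.
Qed.

Lemma ok_sfrom l : forall s, okst s -> okst (sfrom s l).
Proof. induction l as [|b l IH]; simpl; auto. intros s Hs. apply IH. apply ok_child; auto. Qed.

Lemma region_child b s x : okst s -> stD (child b s) x -> stD s x /\ ~ In x (Cof s).
Proof.
  intros Hs. destruct (spec_of Hs) as [_ [_ [_ [_ [_ [H1 [H2 _]]]]]]].
  destruct b; unfold child, stD; simpl; auto.
Qed.

Lemma C_region l : forall s x, okst s -> In x (Cof (sfrom s l)) -> stD s x.
Proof.
  induction l as [|b l IH]; simpl; intros s x Hs Hx.
  - destruct (spec_of Hs) as [_ [_ [HCD _]]]. auto.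
  - apply (@region_child b s x Hs). apply IH; auto. apply ok_child; auto.
Qed.

Lemma C_disj l1 : forall s l2 x, okst s -> l1 <> l2 ->
  In x (Cof (sfrom s l1)) -> In x (Cof (sfrom s l2)) -> False.
Proof.
  induction l1 as [|b1 l1 IH]; intros s l2 x Hs Hne H1 H2; destruct l2 as [|b2 l2]; simpl in *.
  - apply Hne; auto.
  - apply C_region in H2; [|apply ok_child; auto]. apply (@region_child b2 s x Hs) in H2. tauto.
  - apply C_region in H1; [|apply ok_child; auto]. apply (@region_child b1 s x Hs) in H1. tauto.
  - destruct (Bool.bool_dec b1 b2) as [E|E].
    + subst b2. apply (IH (child b1 s) l2 x); auto; [apply ok_child; auto|]. intro; subst; auto.
    + apply C_region in H1; [|apply ok_child; auto]. apply C_region in H2; [|apply ok_child; auto].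
      destruct (spec_of Hs) as [_ [_ [_ [_ [_ [_ [_ [H12 _]]]]]]]].
      destruct b1, b2; try congruence; unfold child, stD in *; simpl in *.
      * apply (H12 x); auto.
      * apply (H12 x); auto.
Qed.

Lemma consist (f : vec -> G -> Prop) l : forall s e,
  (forall g, In g (stA s) -> f (fst e) g) -> (forall g, In g (stB s) -> f (snd e) g) ->
  (forall l' g, In g (Cof (sfrom s l')) -> f (med (ends_from e l')) g) ->
  (forall g, In g (stA (sfrom s l)) -> f (fst (ends_from e l)) g) /\
  (forall g, In g (stB (sfrom s l)) -> f (snd (ends_from e l)) g).
Proof.
  induction l as [|b l IH]; intros s e HA HB HC; simpl; auto.
  apply IH.
  - destruct b; unfold child, stA, ch; simpl; auto. intros g Hg. apply (HC [] g Hg).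
  - destruct b; unfold child, stB, ch; simpl; auto. intros g Hg. apply (HC [] g Hg).
  - intros l' g Hg. apply (HC (b :: l') g Hg).
Qed.

Variables (X Y : list G) (DP DN : G -> Prop).
Hypothesis okP : okst (X, Y, DP).
Hypothesis okN : okst (X, Y, DN).
Hypothesis HPN : forall x, DP x -> ~ DN x.
Hypothesis Xcon : connected_in (adj G) (fun x => In x X).
Hypothesis Ycon : connected_in (adj G) (fun x => In x Y).
Hypothesis Xne : X <> [].
Hypothesis Yne : Y <> [].
Hypothesis XYadj : exists x y, In x X /\ In y Y /\ adj G x y.

Definition sP : st := (X, Y, DP).
Definition sN : st := (X, Y, DN).

Definition Bmap (w : vec) (g : G) : Prop :=
  (w = (0,1)%Z /\ In g X) \/ (w = (1,0)%Z /\ In g Y) \/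
  (exists l, med (ends_from root l) = w /\ In g (Cof (sfrom sP l))) \/
  (exists l, med (ends_from root l) = negv w /\ In g (Cof (sfrom sN l))).

Lemma consistP l : (forall g, In g (stA (sfrom sP l)) -> Bmap (fst (ends_from root l)) g) /\
                   (forall g, In g (stB (sfrom sP l)) -> Bmap (snd (ends_from root l)) g).
Proof.
  apply consist.
  - intros g Hg. left. split; auto.
  - intros g Hg. right; left. split; auto.
  - intros l' g Hg. right; right; left. exists l'. auto.
Qed.

Lemma negv_negv v : negv (negv v) = v.
Proof. destruct v; unfold negv; simpl; f_equal; lia. Qed.

Lemma consistN l : (forall g, In g (stA (sfrom sN l)) -> Bmap (rho (fst (ends_from root l))) g) /\
                   (forall g, In g (stB (sfrom sN l)) -> Bmap (rho (snd (ends_from root l))) g).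
Proof.
  apply (consist (fun v g => Bmap (rho v) g)).
  - intros g Hg. left. split; auto.
  - intros g Hg. right; left. split; auto.
  - intros l' g Hg. right; right; right. exists l'. split; auto.
    pose proof (med_pos _ (inv_ends root l' inv_root)) as [H1 H2].
    unfold rho. destruct (Z.eqb_spec (snd (med (ends_from root l'))) 0); [lia|].
    rewrite negv_negv. reflexivity.
Qed.


Lemma okP_from l : okst (sfrom sP l).
Proof. apply ok_sfrom. exact okP. Qed.
Lemma okN_from l : okst (sfrom sN l).
Proof. apply ok_sfrom. exact okN. Qed.

Lemma CP_reg l g : In g (Cof (sfrom sP l)) -> DP g.
Proof. intros H. apply (@C_region l sP g okP H). Qed.
Lemma CN_reg l g : In g (Cof (sfrom sN l)) -> DN g.
Proof. intros H. apply (@C_region l sN g okN H). Qed.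

Lemma reg_facts g :
  (In g X -> In g Y -> False) /\ (In g X -> DP g -> False) /\ (In g Y -> DP g -> False) /\ (In g X -> DN g -> False) /\ (In g Y -> DN g -> False).
Proof.
  destruct okP as [H1 [H2 _]]. destruct okN as [H3 [H4 _]].
  unfold stA, stB, stD in *; simpl in *.
  split; [|split; [|split; [|split]]].
  - intros A B. exact (H1 g A B).
  - intros A B. exact (proj1 (H2 g B) A).
  - intros A B. exact (proj2 (H2 g B) A).
  - intros A B. exact (proj1 (H4 g B) A).
  - intros A B. exact (proj2 (H4 g B) A).
Qed.

Lemma negv_inj u v : negv u = negv v -> u = v.
Proof. destruct u, v; unfold negv; simpl; intros H; injection H; intros; f_equal; lia. Qed.

Lemma B_disj w w' g : Bmap w g -> Bmap w' g -> w = w'.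
Proof.
  destruct (reg_facts g) as [F1 [F2 [F3 [F4 F5]]]].
  intros [[E1 H1]|[[E1 H1]|[[l1 [E1 H1]]|[l1 [E1 H1]]]]] [[E2 H2]|[[E2 H2]|[[l2 [E2 H2]]|[l2 [E2 H2]]]]];
    try congruence;
    try (pose proof (CP_reg _ _ H1) as R1); try (pose proof (CN_reg _ _ H1) as R1);
    try (pose proof (CP_reg _ _ H2) as R2); try (pose proof (CN_reg _ _ H2) as R2);
    try (exfalso; tauto); try (exfalso; eapply HPN; eauto; fail).
  - destruct (list_eq_dec Bool.bool_dec l1 l2) as [->|Hne]; [congruence|].
    exfalso. eapply (@C_disj l1 sP l2 g okP Hne); eauto.
  - destruct (list_eq_dec Bool.bool_dec l1 l2) as [->|Hne]; [apply negv_inj; congruence|].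
    exfalso. eapply (@C_disj l1 sN l2 g okN Hne); eauto.
Qed.

Lemma med_root_pos l : (1 <= fst (med (ends_from root l)) /\ 1 <= snd (med (ends_from root l)))%Z.
Proof. apply med_pos, inv_ends, inv_root. Qed.

Lemma B_pos_iff w l0 : med (ends_from root l0) = w -> forall g, Bmap w g <-> In g (Cof (sfrom sP l0)).
Proof.
  intros E g. pose proof (med_root_pos l0) as [P1 P2]. rewrite E in P1, P2. split.
  - intros [[E1 H1]|[[E1 H1]|[[l [E1 H1]]|[l [E1 H1]]]]].
    + rewrite E1 in P1. simpl in P1. lia.
    + rewrite E1 in P2. simpl in P2. lia.
    + rewrite <- E in E1. apply unique_sigma in E1; [subst; auto| apply inv_root].
    + pose proof (med_root_pos l) as [Q1 Q2]. rewrite E1 in Q1. unfold negv in Q1. simpl in Q1. lia.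
  - intros H. right; right; left. eauto.
Qed.

Lemma B_neg_iff w l0 : med (ends_from root l0) = negv w -> forall g, Bmap w g <-> In g (Cof (sfrom sN l0)).
Proof.
  intros E g. pose proof (med_root_pos l0) as [P1 P2]. rewrite E in P1, P2. unfold negv in P1, P2.
  simpl in P1, P2. split.
  - intros [[E1 H1]|[[E1 H1]|[[l [E1 H1]]|[l [E1 H1]]]]].
    + rewrite E1 in P1. simpl in P1. lia.
    + rewrite E1 in P2. simpl in P2. lia.
    + pose proof (med_root_pos l) as [Q1 Q2]. rewrite E1 in Q1. lia.
    + rewrite <- E in E1. apply unique_sigma in E1; [subst; auto| apply inv_root].
  - intros H. right; right; right. eauto.
Qed.

Lemma B_X_iff g : Bmap (0,1)%Z g <-> In g X.
Proof.
  split; [|intros H; left; auto].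
  intros [[E1 H1]|[[E1 H1]|[[l [E1 H1]]|[l [E1 H1]]]]]; auto.
  - discriminate.
  - pose proof (med_root_pos l) as [Q1 Q2]. rewrite E1 in Q1. simpl in Q1. lia.
  - pose proof (med_root_pos l) as [Q1 Q2]. rewrite E1 in Q1. simpl in Q1. lia.
Qed.

Lemma B_Y_iff g : Bmap (1,0)%Z g <-> In g Y.
Proof.
  split; [|intros H; right; left; auto].
  intros [[E1 H1]|[[E1 H1]|[[l [E1 H1]]|[l [E1 H1]]]]]; auto.
  - discriminate.
  - pose proof (med_root_pos l) as [Q1 Q2]. rewrite E1 in Q2. simpl in Q2. lia.
  - pose proof (med_root_pos l) as [Q1 Q2]. rewrite E1 in Q2. simpl in Q2. lia.
Qed.

Lemma pos_sigma w : nrm w -> (1 <= fst w)%Z -> (1 <= snd w)%Z -> exists l, med (ends_from root l) = w.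
Proof.
  intros [Hg _] H1 H2. destruct (exists_sigma (fst w) (snd w) H1 H2 Hg) as [l Hl].
  exists l. rewrite Hl. destruct w; auto.
Qed.

Lemma neg_sigma w : nrm w -> (fst w <= -1)%Z -> (1 <= snd w)%Z -> exists l, med (ends_from root l) = negv w.
Proof.
  intros [Hg _] H1 H2. destruct (exists_sigma (- fst w) (snd w)) as [l Hl]; try lia.
  { rewrite Z.gcd_opp_l. auto. }
  exists l. rewrite Hl. destruct w; auto.
Qed.

Lemma B_con w : nrm w -> connected_in (adj G) (Bmap w).
Proof.
  intros Hw. destruct (classify Hw) as [E|[E|[[H1 H2]|[H1 H2]]]].
  - subst w. apply (connected_ext (A := fun g => In g X)); [intros g; rewrite B_X_iff; tauto| auto].
  - subst w. apply (connected_ext (A := fun g => In g Y)); [intros g; rewrite B_Y_iff; tauto| auto].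
  - destruct (pos_sigma Hw H1 H2) as [l Hl].
    apply (connected_ext (A := fun g => In g (Cof (sfrom sP l)))); [intros g; rewrite (@B_pos_iff _ _ Hl); tauto|].
    destruct (spec_of (okP_from l)) as [_ [Hc _]]. auto.
  - destruct (neg_sigma Hw H1 H2) as [l Hl].
    apply (connected_ext (A := fun g => In g (Cof (sfrom sN l)))); [intros g; rewrite (@B_neg_iff _ _ Hl); tauto|].
    destruct (spec_of (okN_from l)) as [_ [Hc _]]. auto.
Qed.

Lemma ne_in (l : list G) : l <> [] -> exists g, In g l.
Proof. destruct l as [|g l]; [tauto|]. exists g; left; auto. Qed.

Lemma B_ne w : nrm w -> exists g, Bmap w g.
Proof.
  intros Hw. destruct (classify Hw) as [E|[E|[[H1 H2]|[H1 H2]]]].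
  - subst w. destruct (ne_in Xne) as [g Hg]. exists g. apply B_X_iff; auto.
  - subst w. destruct (ne_in Yne) as [g Hg]. exists g. apply B_Y_iff; auto.
  - destruct (pos_sigma Hw H1 H2) as [l Hl].
    destruct (spec_of (okP_from l)) as [Hne _]. destruct (ne_in Hne) as [g Hg].
    exists g. apply (@B_pos_iff _ _ Hl); auto.
  - destruct (neg_sigma Hw H1 H2) as [l Hl].
    destruct (spec_of (okN_from l)) as [Hne _]. destruct (ne_in Hne) as [g Hg].
    exists g. apply (@B_neg_iff _ _ Hl); auto.
Qed.

Lemma nrm_facts w : nrm w -> (snd w >= 0)%Z /\ w <> (0,0)%Z /\ w <> (-1,0)%Z.
Proof.
  destruct w as [p q]. intros [Hg [H|[H1 H2]]]; simpl in *.
  - split; [lia|]. split; intro E; injection E; intros; lia.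
  - subst. split; [lia|]. split; discriminate.
Qed.

Lemma rho_neg v : snd v <> 0%Z -> rho v = negv v.
Proof. intros H. unfold rho. destruct (Z.eqb_spec (snd v) 0); [contradiction|auto]. Qed.

Lemma B_edge_P w w' : nrm w -> nrm w' -> (1 <= fst w)%Z -> (1 <= snd w)%Z ->
  (det w w' = 1 \/ det w w' = -1)%Z -> exists g g', Bmap w g /\ Bmap w' g' /\ adj G g g'.
Proof.
  intros Hw Hw' H1 H2 Hd. destruct (pos_sigma Hw H1 H2) as [l0 Hl0].
  destruct (nrm_facts Hw') as [F1 [F2 F3]].
  rewrite <- Hl0 in Hd.
  destruct (@nbr_nodes l0 w' F1 F2 Hd) as [E|[E|[[E _]|[[l' [Em Es]]|[l' [Em Es]]]]]].
  - destruct (spec_of (okP_from l0)) as [_ [_ [_ [[a [c [Ha [Hc Hac]]]] _]]]].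
    exists c, a. split; [apply (@B_pos_iff _ _ Hl0); auto|]. split; [|apply adj_sym; auto].
    rewrite E. apply (proj1 (consistP l0)); auto.
  - destruct (spec_of (okP_from l0)) as [_ [_ [_ [_ [[c [b [Hc [Hb Hcb]]]] _]]]]].
    exists c, b. split; [apply (@B_pos_iff _ _ Hl0); auto|]. split; auto.
    rewrite E. apply (proj2 (consistP l0)); auto.
  - contradiction.
  - destruct (spec_of (okP_from l')) as [_ [_ [_ [_ [[c [b [Hc [Hb Hcb]]]] _]]]]].
    exists b, c. split; [|split; [apply (@B_pos_iff _ _ Em); auto| apply adj_sym; auto]].
    rewrite <- Hl0, <- Es. apply (proj2 (consistP l')); auto.
  - destruct (spec_of (okP_from l')) as [_ [_ [_ [[a [c [Ha [Hc Hac]]]] _]]]].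
    exists a, c. split; [|split; [apply (@B_pos_iff _ _ Em); auto| auto]].
    rewrite <- Hl0, <- Es. apply (proj1 (consistP l')); auto.
Qed.

Lemma det_negv u v : det (negv u) (negv v) = (- det u v)%Z.
Proof. destruct u, v; unfold det, negv; simpl; ring. Qed.

Lemma B_edge_N w w' : nrm w -> nrm w' -> (fst w <= -1)%Z -> (1 <= snd w)%Z ->
  (det w w' = 1 \/ det w w' = -1)%Z -> exists g g', Bmap w g /\ Bmap w' g' /\ adj G g g'.
Proof.
  intros Hw Hw' H1 H2 Hd. destruct (neg_sigma Hw H1 H2) as [l0 Hl0].
  destruct (nrm_facts Hw') as [F1 [F2 F3]].
  assert (G1 : (snd (negv w') >= 0)%Z) by (destruct w'; simpl in *; lia).
  assert (G2 : negv w' <> (0,0)%Z) by (destruct w' as [p q]; unfold negv; simpl; intro E; injection E; intros; apply F2; f_equal; lia).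
  assert (Hd' : (det (med (ends_from root l0)) (negv w') = 1 \/ det (med (ends_from root l0)) (negv w') = -1)%Z)
    by (rewrite Hl0, det_negv; lia).
  assert (Hsw : snd (negv w) <> 0%Z) by (unfold negv; simpl; lia).
  pose proof (inv_ends root l0 inv_root) as Hinv.
  destruct (@nbr_nodes l0 (negv w') G1 G2 Hd') as [E|[E|[[E ER]|[[l' [Em Es]]|[l' [Em Es]]]]]].
  - destruct (spec_of (okN_from l0)) as [_ [_ [_ [[a [c [Ha [Hc Hac]]]] _]]]].
    exists c, a. split; [apply (@B_neg_iff _ _ Hl0); auto|]. split; [|apply adj_sym; auto].
    pose proof (proj1 (consistN l0) a Ha) as Hb.
    rewrite rho_neg in Hb by (destruct Hinv as [_ [Hi _]]; lia).
    rewrite <- E, negv_negv in Hb. exact Hb.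
  - destruct (spec_of (okN_from l0)) as [_ [_ [_ [_ [[c [b [Hc [Hb Hcb]]]] _]]]]].
    exists c, b. split; [apply (@B_neg_iff _ _ Hl0); auto|]. split; auto.
    pose proof (proj2 (consistN l0) b Hb) as Hb'.
    destruct (Z.eq_dec (snd (snd (ends_from root l0))) 0) as [Hz|Hz].
    + exfalso. destruct Hinv as [_ [_ [_ [_ [HR _]]]]]. specialize (HR Hz).
      apply F3. destruct w' as [p q]. destruct (snd (ends_from root l0)) as [r1 r2]. unfold negv in E.
      simpl in *. injection E; intros; subst. f_equal; lia.
    + rewrite rho_neg in Hb' by auto. rewrite <- E, negv_negv in Hb'. exact Hb'.
  - destruct (spec_of (okN_from l0)) as [_ [_ [_ [_ [[c [b [Hc [Hb Hcb]]]] _]]]]].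
    exists c, b. split; [apply (@B_neg_iff _ _ Hl0); auto|]. split; auto.
    pose proof (proj2 (consistN l0) b Hb) as Hb'. rewrite ER in Hb'.
    replace w' with (1,0)%Z; [exact Hb'|]. destruct w' as [p q]. unfold negv in E. simpl in E.
    injection E; intros; f_equal; lia.
  - destruct (spec_of (okN_from l')) as [_ [_ [_ [_ [[c [b [Hc [Hb Hcb]]]] _]]]]].
    exists b, c. split; [|split; [apply (@B_neg_iff _ _ Em); auto| apply adj_sym; auto]].
    pose proof (proj2 (consistN l') b Hb) as Hb'. rewrite Es, Hl0, rho_neg, negv_negv in Hb' by auto. exact Hb'.
  - destruct (spec_of (okN_from l')) as [_ [_ [_ [[a [c [Ha [Hc Hac]]]] _]]]].
    exists a, c. split; [|split; [apply (@B_neg_iff _ _ Em); auto| auto]].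
    pose proof (proj1 (consistN l') a Ha) as Hb'. rewrite Es, Hl0, rho_neg, negv_negv in Hb' by auto. exact Hb'.
Qed.

Lemma det_anti u v : det v u = (- det u v)%Z.
Proof. destruct u, v; unfold det; simpl; ring. Qed.

Lemma B_edge w w' : nrm w -> nrm w' -> (det w w' = 1 \/ det w w' = -1)%Z ->
  exists g g', Bmap w g /\ Bmap w' g' /\ adj G g g'.
Proof.
  intros Hw Hw' Hd.
  assert (Hd' : (det w' w = 1 \/ det w' w = -1)%Z) by (rewrite det_anti; lia).
  destruct (classify Hw) as [E|[E|[[H1 H2]|[H1 H2]]]];
    [| |apply B_edge_P; auto|apply B_edge_N; auto];
  (destruct (classify Hw') as [E'|[E'|[[H1' H2']|[H1' H2']]]];
    [| | destruct (B_edge_P Hw' Hw H1' H2' Hd') as [g [g' [A1 [A2 A3]]]]; exists g', g; split; [|split]; auto; apply adj_sym; auto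
       | destruct (B_edge_N Hw' Hw H1' H2' Hd') as [g [g' [A1 [A2 A3]]]]; exists g', g; split; [|split]; auto; apply adj_sym; auto]);
  subst; unfold det in Hd; simpl in Hd; try lia.
  - destruct XYadj as [x [y [Hx [Hy Hxy]]]]. exists x, y. split; [apply B_X_iff|split; [apply B_Y_iff|]]; auto.
  - destruct XYadj as [x [y [Hx [Hy Hxy]]]]. exists y, x. split; [apply B_Y_iff|split; [apply B_X_iff|]]; auto.
    apply adj_sym; auto.
Qed.

Lemma farey_minor : minor Farey G.
Proof.
  exists (fun h g => Bmap (proj1_sig h) g). split; [|split; [|split]].
  - intros h. apply B_ne. apply fv_nrm.
  - intros h h' g Hne H1 H2. apply Hne. apply fv_inj. eapply B_disj; eauto.
  - intros h. apply B_con. apply fv_nrm.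
  - intros h h' Hadj. apply B_edge; try apply fv_nrm. apply farey_adj_det. exact Hadj.
Qed.

End Construction.

End MP6.
Import MP6.

Module MP7.
Import ListNotations.
Set Implicit Arguments.

Lemma inj_map_NoDup {A B : Type} (f : A -> B) l :
  (forall x y, f x = f y -> x = y) -> NoDup l -> NoDup (map f l).
Proof.
  intros Hf; induction l as [|x l IH]; simpl; intros Hd; constructor.
  - inversion Hd; subst. intro H. apply in_map_iff in H. destruct H as [y [E Hy]].
    apply Hf in E. subst. contradiction.
  - inversion Hd; auto.
Qed.

Lemma sep_not_inf (G : graph) :
  (forall u v : G, u <> v -> exists S : list G, forall p, is_path (adj G) p u v -> interior p <> [] ->
      exists s, In s (interior p) /\ In s S) -> ~ inf_indep_paths G.
Proof.
  intros HS [u [v [P [Huv [HP [Hinj Hdis]]]]]].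
  destruct (HS u v Huv) as [Sx HSS].
  assert (Hemp : forall n, interior (P n) = [] -> P n = [u; v]).
  { intros n He. pose proof (path_shape (HP n) Huv) as E. rewrite He in E. exact E. }
  set (j := fun k => match interior (P (2 * k)%nat) with [] => S (2 * k)%nat | _ => (2 * k)%nat end).
  assert (Hj : forall k, interior (P (j k)) <> [] /\ (j k = 2 * k \/ j k = S (2 * k))%nat).
  { intros k. unfold j. destruct (interior (P (2 * k)%nat)) as [|a l] eqn:E.
    - split; auto. intro E2. apply Hemp in E. apply Hemp in E2. rewrite <- E2 in E. apply Hinj in E. lia.
    - rewrite E. split; [discriminate|auto]. }
  assert (Hex : forall k, exists s, In s (interior (P (j k))) /\ In s Sx).
  { intros k. apply HSS; [apply HP|apply Hj]. }
  set (f := fun k => proj1_sig (constructive_indefinite_description _ (Hex k))).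
  assert (Hf : forall k, In (f k) (interior (P (j k))) /\ In (f k) Sx).
  { intros k. unfold f. destruct (constructive_indefinite_description _ (Hex k)) as [s Hs]. exact Hs. }
  assert (Hfi : forall x y, f x = f y -> x = y).
  { intros x y E. destruct (Nat.eq_dec (j x) (j y)) as [E'|E'].
    - destruct (Hj x) as [_ Hx]. destruct (Hj y) as [_ Hy]. lia.
    - exfalso. apply (Hdis (j x) (j y) (f x) E'); [apply Hf|]. rewrite E. apply Hf. }
  assert (Hi : incl (map f (seq 0 (S (length Sx)))) Sx).
  { intros x Hx. apply in_map_iff in Hx. destruct Hx as [k [<- _]]. apply Hf. }
  pose proof (NoDup_incl_length (inj_map_NoDup f Hfi (seq_NoDup (S (length Sx)) 0)) Hi) as H. rewrite length_map, length_seq in H. lia.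
Qed.

End MP7.
Import MP7.

Module MP8.
Import ListNotations.
Set Implicit Arguments.
Open Scope Z_scope.

Definition negvec (v : vec) : vec := (- fst v, - snd v).
Definition gb (X Y w : vec) : Z := (det X Y * det w Y) * (det X Y * det X w).

Lemma gb_prop X Y w w' : (det X Y = 1 \/ det X Y = -1) -> (det w w' = 1 \/ det w w' = -1) ->
  ~ (gb X Y w < 0 /\ gb X Y w' > 0).
Proof.
  intros HXY Hw [H1 H2].
  assert (Key : (det X Y * det w Y) * (det X Y * det X w') - (det X Y * det X w) * (det X Y * det w' Y)
                = det X Y * det X Y * det X Y * det w w').
  { destruct X, Y, w, w'. unfold det; simpl. ring. }
  unfold gb in H1, H2.
  set (d := det X Y) in *.
  set (al := d * det w Y) in *. set (be := d * det X w) in *.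
  set (al' := d * det w' Y) in *. set (be' := d * det X w') in *.
  assert (Hk : al * be' - be * al' = 1 \/ al * be' - be * al' = -1).
  { rewrite Key. destruct HXY as [E|E]; rewrite E; lia. }
  clearbody al be al' be'. clear Key.
  destruct (Z_lt_le_dec al 0); destruct (Z_lt_le_dec al' 0); nia.
Qed.

Lemma nrm_neg a b : nrm a -> nrm b -> a = negvec b -> False.
Proof.
  destruct a as [a1 a2], b as [b1 b2]. unfold nrm, negvec; simpl. intros [_ Ha] [_ Hb] E.
  injection E; intros; subst. lia.
Qed.

Lemma gb_zero X Y w : (det X Y = 1 \/ det X Y = -1) -> nrm w -> gb X Y w = 0 ->
  w = X \/ w = negvec X \/ w = Y \/ w = negvec Y.
Proof.
  destruct X as [x1 x2], Y as [y1 y2], w as [w1 w2]. unfold gb, det, nrm, negvec; simpl.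
  intros Hd [Hg _] H0.
  set (d := x1 * y2 - x2 * y1) in *.
  assert (Hd2 : d * d = 1) by (destruct Hd as [E|E]; rewrite E; reflexivity).
  apply Z.mul_eq_0 in H0. destruct H0 as [H0|H0]; apply Z.mul_eq_0 in H0;
    destruct H0 as [H0|H0]; try (destruct Hd as [E|E]; rewrite E in H0; discriminate).
  - (* det w Y = 0 : w multiple of Y *)
    set (c := d * (x1 * w2 - x2 * w1)).
    assert (I1 : d * w1 = (w1*y2 - w2*y1) * x1 + (x1*w2 - x2*w1) * y1) by (unfold d; ring).
    assert (I2 : d * w2 = (w1*y2 - w2*y1) * x2 + (x1*w2 - x2*w1) * y2) by (unfold d; ring).
    rewrite H0 in I1, I2.
    assert (E1 : w1 = c * y1).
    { transitivity (d * (d * w1)); [rewrite Z.mul_assoc, Hd2; ring|]. rewrite I1. unfold c. ring. }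
    assert (E2 : w2 = c * y2).
    { transitivity (d * (d * w2)); [rewrite Z.mul_assoc, Hd2; ring|]. rewrite I2. unfold c. ring. }
    assert (Hc : (c | 1)).
    { rewrite <- Hg. apply Z.gcd_greatest; [exists y1 | exists y2]; lia. }
    apply Z.divide_1_r in Hc. rewrite E1, E2.
    destruct Hc as [-> | ->]; [right; right; left | right; right; right]; f_equal; lia.
  - set (c := d * (w1 * y2 - w2 * y1)).
    assert (I1 : d * w1 = (w1*y2 - w2*y1) * x1 + (x1*w2 - x2*w1) * y1) by (unfold d; ring).
    assert (I2 : d * w2 = (w1*y2 - w2*y1) * x2 + (x1*w2 - x2*w1) * y2) by (unfold d; ring).
    rewrite H0 in I1, I2.
    assert (E1 : w1 = c * x1).
    { transitivity (d * (d * w1)); [rewrite Z.mul_assoc, Hd2; ring|]. rewrite I1. unfold c. ring. }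
    assert (E2 : w2 = c * x2).
    { transitivity (d * (d * w2)); [rewrite Z.mul_assoc, Hd2; ring|]. rewrite I2. unfold c. ring. }
    assert (Hc : (c | 1)).
    { rewrite <- Hg. apply Z.gcd_greatest; [exists x1 | exists x2]; lia. }
    apply Z.divide_1_r in Hc. rewrite E1, E2.
    destruct Hc as [-> | ->]; [left | right; left]; f_equal; lia.
Qed.

Lemma gcd_of_det X Y : (det X Y = 1 \/ det X Y = -1) -> Z.gcd (fst X) (snd X) = 1.
Proof.
  destruct X as [x1 x2], Y as [y1 y2]. unfold det; simpl. intros [E|E]; apply Z.bezout_1_gcd.
  - exists y2, (- y1). lia.
  - exists (- y2), y1. lia.
Qed.

Lemma mk_vert X Y : (det X Y = 1 \/ det X Y = -1) ->
  exists x : farey_vert, proj1_sig x = X \/ proj1_sig x = negvec X.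
Proof.
  intros Hd. pose proof (gcd_of_det _ _ Hd) as Hg.
  destruct X as [x1 x2]. simpl in Hg.
  destruct (Z.lt_total x2 0) as [H|[H|H]].
  - assert (Hn : nrm (negvec (x1, x2))).
    { unfold nrm, negvec; simpl. rewrite Z.gcd_opp_l, Z.gcd_opp_r. split; auto. left; lia. }
    exists (exist _ _ Hn). right. reflexivity.
  - subst x2. rewrite Z.gcd_0_r in Hg.
    destruct (Z.abs_spec x1) as [[_ E]|[_ E]]; rewrite E in Hg.
    + assert (Hn : nrm (x1, 0)) by (unfold nrm; simpl; rewrite Z.gcd_0_r; split; [lia|right; lia]).
      exists (exist _ _ Hn). left. reflexivity.
    + assert (Hn : nrm (negvec (x1, 0))) by (unfold nrm, negvec; simpl; rewrite Z.gcd_0_r; split; [lia|right; lia]).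
      exists (exist _ _ Hn). right. reflexivity.
  - assert (Hn : nrm (x1, x2)) by (unfold nrm; simpl; split; auto).
    exists (exist _ _ Hn). left. reflexivity.
Qed.

Lemma chain_zero (g : vec -> Z) (l : list farey_vert) x :
  (forall a b, farey_adj a b -> ~ (g (proj1_sig a) < 0 /\ g (proj1_sig b) > 0)) ->
  chain farey_adj (x :: l) -> g (proj1_sig x) < 0 -> g (proj1_sig (last (x :: l) x)) > 0 ->
  exists w, In w (x :: l) /\ g (proj1_sig w) = 0.
Proof.
  intros Hg. revert x. induction l as [|y l IH]; intros x Hc Hx Hl.
  - simpl in Hl. lia.
  - destruct Hc as [Hxy Hc].
    destruct (Z.lt_total (g (proj1_sig y)) 0) as [H|[H|H]].
    + rewrite last_cons_cons in Hl.
      rewrite (@last_indep _ (y :: l) x y) in Hl by discriminate.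
      destruct (IH y Hc H Hl) as [w [Hw Hw0]]. exists w. split; auto. right; auto.
    + exists y. split; auto. right; left; auto.
    + exfalso. apply (Hg x y Hxy). split; lia.
Qed.

Lemma farey_adj_sym' (a b : farey_vert) : farey_adj a b -> farey_adj b a.
Proof. apply farey_adj_sym. Qed.

Lemma basis_zero X Y (l : list farey_vert) x : (det X Y = 1 \/ det X Y = -1) ->
  chain farey_adj (x :: l) ->
  gb X Y (proj1_sig x) * gb X Y (proj1_sig (last (x :: l) x)) <= 0 ->
  exists w, In w (x :: l) /\ gb X Y (proj1_sig w) = 0.
Proof.
  intros Hd Hc Hs.
  assert (Hp : forall a b : farey_vert, farey_adj a b -> ~ (gb X Y (proj1_sig a) < 0 /\ gb X Y (proj1_sig b) > 0)).
  { intros a b Hab. apply gb_prop; auto. apply farey_adj_det; auto. }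
  set (y := last (x :: l) x) in *.
  assert (Hy : In y (x :: l)) by (apply last_in; discriminate).
  destruct (Z.lt_total (gb X Y (proj1_sig x)) 0) as [H1|[H1|H1]];
  destruct (Z.lt_total (gb X Y (proj1_sig y)) 0) as [H2|[H2|H2]];
  try (exists x; split; [left; auto| auto]; fail);
  try (exists y; split; auto; fail); try nia.
  - apply chain_zero; auto. apply Z.lt_gt. exact H2.
  -
    assert (Hne : x :: l <> []) by discriminate.
    destruct (rev (x :: l)) as [|z m] eqn:Er.
    { apply (f_equal (@length _)) in Er. rewrite length_rev in Er. simpl in Er. discriminate. }
    assert (Hz : z = y).
    { pose proof (hd_rev x Hne) as Hh. rewrite Er in Hh. simpl in Hh. injection Hh; auto. }
    assert (Hlast : last (z :: m) z = x).
    { rewrite <- Er. apply last_rev. reflexivity. }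
    assert (Hc' : chain farey_adj (z :: m)).
    { rewrite <- Er. apply chain_rev; auto. apply farey_adj_sym'. }
    destruct (chain_zero (gb X Y) m z) as [w [Hw Hw0]].
    + exact Hp.
    + exact Hc'.
    + rewrite Hz. exact H2.
    + rewrite Hlast. apply Z.lt_gt. exact H1.
    + exists w. split; [|exact Hw0]. rewrite <- Er in Hw. apply in_rev. exact Hw.
Qed.

End MP8.
Import MP8.

Module MP9.
Import ListNotations.
Set Implicit Arguments.
Open Scope Z_scope.

Lemma det_zero_eq (u v : farey_vert) : det (proj1_sig u) (proj1_sig v) = 0 -> u = v.
Proof.
  intros H. apply fv_inj.
  pose proof (fv_nrm u) as Hu. pose proof (fv_nrm v) as Hv.
  destruct (proj1_sig u) as [a b] eqn:Eu, (proj1_sig v) as [c d] eqn:Ev.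
  destruct Hu as [Hgu _], Hv as [Hgv _]. simpl in *. unfold det in H; simpl in H.
  destruct (Z.gcd_bezout a b 1 Hgu) as [x [y Hxy]].
  set (t := x * c + y * d).
  assert (Hbc : b * c = a * d) by lia.
  assert (Ec : c = t * a).
  { unfold t. transitivity (c * (x * a + y * b)); [rewrite Hxy; ring|].
    replace (c * (x * a + y * b)) with (x * c * a + y * (b * c)) by ring. rewrite Hbc. ring. }
  assert (Ed : d = t * b).
  { unfold t. transitivity (d * (x * a + y * b)); [rewrite Hxy; ring|].
    replace (d * (x * a + y * b)) with (x * (a * d) + y * d * b) by ring. rewrite <- Hbc. ring. }
  assert (Ht : (t | 1)).
  { rewrite <- Hgv. apply Z.gcd_greatest; [exists a | exists b]; lia. }
  apply Z.divide_1_r in Ht. destruct Ht as [Ht|Ht]; rewrite Ht in Ec, Ed.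
  - subst. f_equal; ring.
  - exfalso. apply (nrm_neg (a:=(c,d)) (b:=(a,b))).
    + rewrite <- Ev. apply fv_nrm.
    + rewrite <- Eu. apply fv_nrm.
    + unfold negvec. simpl. f_equal; lia.
Qed.

Lemma nonadj_basis u v : nrm u -> nrm v -> det u v <> 1 -> det u v <> -1 -> det u v <> 0 ->
  exists X Y, (det X Y = 1 \/ det X Y = -1) /\ gb X Y u < 0 /\ gb X Y v > 0.
Proof.
  intros Hu Hv H1 H2 H0.
  destruct u as [a b], v as [c d].
  destruct Hu as [Hgu _]. destruct Hv as [Hgv _]. simpl in Hgu, Hgv.
  unfold det in H0, H1, H2; simpl in H0, H1, H2.
  destruct (Z.gcd_bezout a b 1 Hgu) as [x [y Hxy]].
  assert (HU : exists e f, (a * f - b * e = 1 \/ a * f - b * e = -1) /\ (a*f - b*e) * (a*d - b*c) >= 2).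
  { destruct (Z_lt_le_dec 0 (a*d - b*c)).
    - exists (-y), x. split; [left; lia|]. assert (a * x - b * - y = 1) by lia. rewrite H. lia.
    - exists y, (-x). split; [right; lia|]. assert (a * - x - b * y = -1) by lia. rewrite H. lia. }
  destruct HU as [e [f [HD Hn]]].
  set (D := a * f - b * e) in *.
  assert (HD2 : D * D = 1) by (destruct HD as [E|E]; rewrite E; reflexivity).
  set (m := D * (c * f - d * e)). set (n := D * (a * d - b * c)).
  assert (Ec : c = m * a + n * e).
  { transitivity (D * D * c); [rewrite HD2; ring|]. unfold m, n, D. ring. }
  assert (Ed : d = m * b + n * f).
  { transitivity (D * D * d); [rewrite HD2; ring|]. unfold m, n, D. ring. }
  assert (Hn2 : n >= 2) by (unfold n; lia).
  clearbody m n.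
  pose proof (Z.div_mod m n ltac:(lia)) as Hdm.
  pose proof (Z.mod_pos_bound m n ltac:(lia)) as Hmb.
  set (k := m / n) in *. set (r := m mod n) in *. clearbody k r.
  assert (Hr : r <> 0).
  { intro Hr0. rewrite Hr0 in Hdm.
    assert (Hnd : (n | 1)).
    { rewrite <- Hgv. apply Z.gcd_greatest; [exists (k * a + e) | exists (k * b + f)]; nia. }
    apply Z.divide_1_r in Hnd. lia. }
  exists (k*a + e, k*b + f), ((k+1)*a + e, (k+1)*b + f). split; [|split].
  - assert (E : det (k*a + e, k*b + f) ((k+1)*a + e, (k+1)*b + f) = - D) by (unfold det, D; simpl; ring).
    rewrite E. lia.
  - assert (E : gb (k*a + e, k*b + f) ((k+1)*a + e, (k+1)*b + f) (a, b) = - ((D * D) * (D * D)))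
      by (unfold gb, det, D; simpl; ring).
    rewrite E, HD2. lia.
  - rewrite Ec, Ed.
    assert (E : gb (k*a + e, k*b + f) ((k+1)*a + e, (k+1)*b + f) (m * a + n * e, m * b + n * f)
       = (D * D) * (D * D) * ((m - n * (k + 1)) * (k * n - m))) by (unfold gb, det, D; simpl; ring).
    rewrite E, HD2. rewrite Hdm. nia.
Qed.

Lemma vert_pm (w x : farey_vert) X :
  (proj1_sig x = X \/ proj1_sig x = negvec X) -> (proj1_sig w = X \/ proj1_sig w = negvec X) -> w = x.
Proof.
  intros Hx Hw. apply fv_inj.
  assert (NN : forall V, negvec (negvec V) = V) by (intros [p q]; unfold negvec; simpl; f_equal; ring).
  destruct Hx as [Hx|Hx], Hw as [Hw|Hw]; try congruence; exfalso.
  - apply (nrm_neg (fv_nrm w) (fv_nrm x)). rewrite Hw, Hx. reflexivity.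
  - apply (nrm_neg (fv_nrm x) (fv_nrm w)). rewrite Hw, Hx. reflexivity.
Qed.

Lemma gb_uv u v w : gb u v w = (det u v * det u v) * (det w v * det u w).
Proof. destruct u, v, w; unfold gb, det; simpl; ring. Qed.
Lemma gb_plus u v w : gb u (vadd u v) w = (det u v * det u v) * ((det w v - det u w) * det u w).
Proof. destruct u, v, w; unfold gb, det, vadd; simpl; ring. Qed.
Definition vsub (u v : vec) : vec := (fst u - fst v, snd u - snd v).
Lemma gb_minus u v w : gb u (vsub u v) w = (det u v * det u v) * ((- det u w - det w v) * det u w).
Proof. destruct u, v, w; unfold gb, det, vsub; simpl; ring. Qed.

Lemma gb_zero_vert X Y (w : farey_vert) : (det X Y = 1 \/ det X Y = -1) -> gb X Y (proj1_sig w) = 0 ->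
  (proj1_sig w = X \/ proj1_sig w = negvec X) \/ (proj1_sig w = Y \/ proj1_sig w = negvec Y).
Proof. intros Hd Hz. destruct (gb_zero X Y Hd (fv_nrm w) Hz) as [E|[E|[E|E]]]; auto. Qed.

Lemma not_pm (w u : farey_vert) : w <> u -> ~ (proj1_sig w = proj1_sig u \/ proj1_sig w = negvec (proj1_sig u)).
Proof.
  intros Hne [E|E].
  - apply Hne. apply fv_inj; auto.
  - apply (nrm_neg (fv_nrm w) (fv_nrm u)). auto.
Qed.

Lemma adj_sep (u v mp mm : farey_vert) :
  (det (proj1_sig u) (proj1_sig v) = 1 \/ det (proj1_sig u) (proj1_sig v) = -1) ->
  (proj1_sig mp = vadd (proj1_sig u) (proj1_sig v) \/ proj1_sig mp = negvec (vadd (proj1_sig u) (proj1_sig v))) ->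
  (proj1_sig mm = vsub (proj1_sig u) (proj1_sig v) \/ proj1_sig mm = negvec (vsub (proj1_sig u) (proj1_sig v))) ->
  forall p, is_path farey_adj p u v -> interior p <> [] -> In mp (interior p) \/ In mm (interior p).
Proof.
  intros Hd Hmp Hmm p Hp Hne.
  assert (He2 : det (proj1_sig u) (proj1_sig v) * det (proj1_sig u) (proj1_sig v) = 1)
    by (destruct Hd as [E|E]; rewrite E; reflexivity).
  assert (Huv : u <> v).
  { intro E; subst v. destruct (proj1_sig u); unfold det in Hd; simpl in Hd; lia. }
  assert (Hz : forall w, In w (interior p) -> gb (proj1_sig u) (proj1_sig v) (proj1_sig w) <> 0).
  { intros w Hw H0. destruct (path_interior_in w Hp Hw) as [_ [Hwu Hwv]].
    destruct (gb_zero_vert _ _ w Hd H0) as [E|E]; [apply (not_pm Hwu E)|apply (not_pm Hwv E)]. }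
  pose proof (path_shape Hp Huv) as Ep.
  destruct (interior p) as [|w1 I'] eqn:EI; [congruence|].
  assert (HcI : chain farey_adj (w1 :: I')).
  { rewrite <- EI. apply chain_interior. apply Hp. }
  assert (Hc : chain farey_adj p) by apply Hp.
  assert (Hu1 : farey_adj u w1). { rewrite Ep in Hc. simpl in Hc. tauto. }
  set (wk := last (w1 :: I') w1).
  assert (Hkv : farey_adj wk v).
  { assert (EI2 : w1 :: I' = removelast (w1 :: I') ++ [wk]) by (apply app_removelast_last; discriminate).
    assert (Hc' : chain farey_adj ((u :: removelast (w1 :: I')) ++ wk :: [v])).
    { replace ((u :: removelast (w1 :: I')) ++ wk :: [v]) with p; [exact Hc|].
      rewrite Ep. rewrite EI2 at 1. simpl. rewrite <- app_assoc. reflexivity. }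
    apply chain_app in Hc'. destruct Hc' as [_ Hc']. simpl in Hc'. tauto. }
  assert (Hw1I : In w1 (interior p)) by (rewrite EI; left; auto).
  assert (HwkI : In wk (interior p)) by (rewrite EI; apply last_in; discriminate).
  apply farey_adj_det in Hu1. apply farey_adj_det in Hkv.
  pose proof (Hz w1 (or_introl eq_refl)) as Z1.
  pose proof (Hz wk ltac:(apply last_in; discriminate)) as Zk.
  set (U := proj1_sig u) in *. set (V := proj1_sig v) in *.
  set (W1 := proj1_sig w1) in *. set (Wk := proj1_sig wk) in *.
  assert (Hdl : det U W1 * det U W1 = 1) by (destruct Hu1 as [E|E]; rewrite E; reflexivity).
  assert (Hgm : det Wk V * det Wk V = 1) by (destruct Hkv as [E|E]; rewrite E; reflexivity).
  assert (G1 : gb U V W1 = det W1 V * det U W1) by (rewrite gb_uv, He2; ring).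
  assert (Gk : gb U V Wk = det Wk V * det U Wk) by (rewrite gb_uv, He2; ring).
  rewrite G1 in Z1. rewrite Gk in Zk.
  assert (Hsame : 0 < (det W1 V * det U W1) * (det Wk V * det U Wk)).
  { destruct (Z_lt_le_dec 0 ((det W1 V * det U W1) * (det Wk V * det U Wk))) as [H|H]; auto. exfalso.
    destruct (basis_zero U V I' w1 Hd HcI) as [w [Hw Hw0]].
    { fold wk. fold Wk. fold W1. rewrite G1, Gk. lia. }
    apply (Hz w); auto. }
  assert (HBB : det U Wk * det U Wk = (det Wk V * det U Wk) * (det Wk V * det U Wk)).
  { transitivity (det Wk V * det Wk V * (det U Wk * det U Wk)); [rewrite Hgm; ring| ring]. }
  destruct (Z_lt_le_dec 0 (det W1 V * det U W1)) as [Hpos|Hneg].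
  - assert (Hd2 : det U (vadd U V) = 1 \/ det U (vadd U V) = -1).
    { replace (det U (vadd U V)) with (det U V) by (destruct U, V; unfold det, vadd; simpl; ring). auto. }
    assert (H1' : 0 <= gb U (vadd U V) W1) by (rewrite gb_plus, He2; nia).
    assert (Hk' : gb U (vadd U V) Wk <= 0).
    { rewrite gb_plus, He2. assert (0 < det Wk V * det U Wk) by nia. nia. }
    destruct (basis_zero U (vadd U V) I' w1 Hd2 HcI) as [w [Hw Hw0]].
    { fold wk. fold Wk. fold W1. nia. }
    assert (HwI : In w (interior p)) by (rewrite EI; auto).
    destruct (path_interior_in w Hp HwI) as [_ [Hwu _]].
    destruct (gb_zero_vert U (vadd U V) w Hd2 Hw0) as [E|E]; [exfalso; apply (not_pm Hwu E)|].
    left. rewrite (vert_pm w mp Hmp E) in HwI. rewrite EI in HwI. exact HwI.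
  - assert (Hd3 : det U (vsub U V) = 1 \/ det U (vsub U V) = -1).
    { replace (det U (vsub U V)) with (- det U V) by (destruct U, V; unfold det, vsub; simpl; ring). lia. }
    assert (Hn1 : det W1 V * det U W1 < 0) by lia.
    assert (H1' : 0 <= gb U (vsub U V) W1) by (rewrite gb_minus, He2; nia).
    assert (Hk' : gb U (vsub U V) Wk <= 0).
    { rewrite gb_minus, He2. assert (det Wk V * det U Wk < 0) by nia. nia. }
    destruct (basis_zero U (vsub U V) I' w1 Hd3 HcI) as [w [Hw Hw0]].
    { fold wk. fold Wk. fold W1. nia. }
    assert (HwI : In w (interior p)) by (rewrite EI; auto).
    destruct (path_interior_in w Hp HwI) as [_ [Hwu _]].
    destruct (gb_zero_vert U (vsub U V) w Hd3 Hw0) as [E|E]; [exfalso; apply (not_pm Hwu E)|].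
    right. rewrite (vert_pm w mm Hmm E) in HwI. rewrite EI in HwI. exact HwI.
Qed.

End MP9.
Import MP9.

Module MP10.
Import ListNotations.
Set Implicit Arguments.
Open Scope Z_scope.

Lemma farey_sep (u v : Farey) : u <> v -> exists S : list Farey, forall p, is_path (adj Farey) p u v ->
  interior p <> [] -> exists s, In s (interior p) /\ In s S.
Proof.
  intros Huv.
  destruct (Z.eq_dec (det (proj1_sig u) (proj1_sig v)) 0) as [H0|H0].
  { exfalso; apply Huv; apply det_zero_eq; auto. }
  destruct (classic (det (proj1_sig u) (proj1_sig v) = 1 \/ det (proj1_sig u) (proj1_sig v) = -1)) as [Hadj|Hnadj].
  - destruct (mk_vert (vadd (proj1_sig u) (proj1_sig v)) (proj1_sig u)) as [mp Hmp].
    { replace (det (vadd (proj1_sig u) (proj1_sig v)) (proj1_sig u)) with (- det (proj1_sig u) (proj1_sig v))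
        by (destruct (proj1_sig u), (proj1_sig v); unfold det, vadd; simpl; ring). lia. }
    destruct (mk_vert (vsub (proj1_sig u) (proj1_sig v)) (proj1_sig u)) as [mm Hmm].
    { replace (det (vsub (proj1_sig u) (proj1_sig v)) (proj1_sig u)) with (det (proj1_sig u) (proj1_sig v))
        by (destruct (proj1_sig u), (proj1_sig v); unfold det, vsub; simpl; ring). lia. }
    exists [mp; mm]. intros p Hp Hne.
    destruct (@adj_sep u v mp mm Hadj Hmp Hmm p Hp Hne) as [H|H]; [exists mp | exists mm]; split; simpl; auto.
  - destruct (nonadj_basis (fv_nrm u) (fv_nrm v)) as [X [Y [HXY [Hu Hv]]]]; try tauto.
    destruct (mk_vert X Y HXY) as [x Hx].
    destruct (mk_vert Y X) as [y Hy].
    { replace (det Y X) with (- det X Y) by (destruct X, Y; unfold det; simpl; ring). lia. }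
    exists [x; y]. intros p Hp Hne.
    pose proof (path_shape Hp Huv) as Ep.
    assert (Hc : chain farey_adj (u :: interior p ++ [v])) by (rewrite <- Ep; apply Hp).
    destruct (basis_zero X Y (interior p ++ [v]) u HXY Hc) as [w [Hw Hw0]].
    { rewrite app_comm_cons, last_last. nia. }
    assert (Hwi : In w (interior p)).
    { destruct Hw as [Hw|Hw]; [subst; lia|]. apply in_app_or in Hw. destruct Hw as [Hw|[Hw|[]]]; auto. subst; lia. }
    destruct (gb_zero_vert X Y w HXY Hw0) as [E|E].
    + exists x. split; [|left; auto]. rewrite <- (vert_pm w x Hx E). auto.
    + exists y. split; [|right; left; auto]. rewrite <- (vert_pm w y Hy E). auto.
Qed.

Lemma farey_no_inf : ~ inf_indep_paths Farey.
Proof. apply sep_not_inf. apply farey_sep. Qed.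

Lemma nrm10 : nrm (1, 0).
Proof. unfold nrm; simpl. split; [reflexivity| right; split; reflexivity]. Qed.
Lemma nrm01 : nrm (0, 1).
Proof. unfold nrm; simpl. split; [reflexivity| left; reflexivity]. Qed.
Definition finf : farey_vert := exist _ (1, 0) nrm10.
Definition fzero : farey_vert := exist _ (0, 1) nrm01.

Lemma walk_cons {V : Type} (R : V -> V -> Prop) x y w z :
  R x y -> walk R w y z -> walk R (x :: w) x z.
Proof.
  intros H Hw. pose proof (walk_app (@walk_edge _ R x y H) Hw) as Hw'.
  destruct w as [|a w]; [destruct Hw as [Hh _]; discriminate|].
  destruct Hw as [Hh _]. simpl in Hh. injection Hh as ->. exact Hw'.
Qed.

Lemma to_inf_aux n : forall w : farey_vert, (Z.to_nat (snd (proj1_sig w)) <= n)%nat ->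
  exists l, walk farey_adj l w finf.
Proof.
  induction n as [|n IH]; intros w Hn.
  - assert (Hq : snd (proj1_sig w) = 0).
    { pose proof (fv_nrm w) as [_ H]. lia. }
    pose proof (fv_nrm w) as [_ [H|[_ Hp]]]; [lia|].
    assert (w = finf) by (apply fv_inj; simpl; destruct (proj1_sig w); simpl in *; subst; auto).
    subst. exists [finf]. apply walk_single.
  - pose proof (fv_nrm w) as Hw. destruct (proj1_sig w) as [p q] eqn:Ew.
    destruct Hw as [Hg Hq]. simpl in Hg, Hq, Hn.
    destruct (Z_le_gt_dec q 1) as [Hq1|Hq1].
    + destruct Hq as [Hq|[Hq0 Hp1]].
      * assert (q = 1) by lia. subst q. exists [w; finf]. apply walk_edge.
        apply farey_adj_det. rewrite Ew. unfold det; simpl. lia.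
      * apply (IH w). rewrite Ew. simpl. lia.
    + destruct (Z.gcd_bezout p q 1 Hg) as [x [y Hxy]].
      pose proof (Z.div_mod x q ltac:(lia)) as Hdm.
      pose proof (Z.mod_pos_bound x q ltac:(lia)) as Hmb.
      set (k := x / q) in *. set (s := x mod q) in *. clearbody k s.
      set (r := - y - k * p).
      assert (Hdet : p * s - q * r = 1) by (unfold r; nia).
      assert (Hs0 : s <> 0).
      { intro E. rewrite E in Hdet. assert (Hd : (q | 1)) by (exists (- r); lia).
        apply Z.divide_1_r in Hd. lia. }
      assert (Hn2 : nrm (r, s)).
      { unfold nrm; simpl. split; [|left; lia]. apply Z.bezout_1_gcd. exists (- q), p. lia. }
      destruct (IH (exist _ _ Hn2)) as [l Hl]. { simpl. lia. }
      exists (w :: l). eapply walk_cons; [|exact Hl].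
      apply farey_adj_det. rewrite Ew. simpl. unfold det; simpl. lia.
Qed.

Lemma to_inf (w : farey_vert) : exists l, walk farey_adj l w finf.
Proof. eapply to_inf_aux. apply le_n. Qed.

Fixpoint cnt {A : Type} (P : A -> Prop) (l : list A) : nat :=
  match l with
  | [] => 0%nat
  | x :: l' => ((if excluded_middle_informative (P x) then 1 else 0) + cnt P l')%nat
  end.

Lemma cnt_le {A : Type} (P Q : A -> Prop) l : (forall x, In x l -> P x -> Q x) -> (cnt P l <= cnt Q l)%nat.
Proof.
  induction l as [|x l IH]; simpl; intros H; auto.
  destruct (excluded_middle_informative (P x)); destruct (excluded_middle_informative (Q x));
    try (exfalso; eauto; fail); specialize (IH (fun y Hy => H y (or_intror Hy))); lia.
Qed.

Lemma cnt_lt {A : Type} (P Q : A -> Prop) l : (forall x, In x l -> P x -> Q x) ->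
  (exists x, In x l /\ Q x /\ ~ P x) -> (cnt P l < cnt Q l)%nat.
Proof.
  induction l as [|x l IH]; simpl; intros H [y [Hy [HQ HP]]]; [destruct Hy|].
  assert (Hle := cnt_le P Q l (fun z Hz => H z (or_intror Hz))).
  destruct Hy as [Hy|Hy].
  - subst y. destruct (excluded_middle_informative (P x)); [contradiction|].
    destruct (excluded_middle_informative (Q x)); [|contradiction]. lia.
  - assert (Hlt : (cnt P l < cnt Q l)%nat) by (apply IH; eauto).
    destruct (excluded_middle_informative (P x)); destruct (excluded_middle_informative (Q x));
      try (exfalso; eauto; fail); lia.
Qed.

Definition incone (U V x : vec) : Prop :=
  exists m n, 0 <= m /\ 0 <= n /\ x = (m * fst U + n * fst V, m * snd U + n * snd V).
Definition inreg (U V : vec) (e : farey_vert * farey_vert) : Prop :=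
  incone U V (proj1_sig (fst e)) /\ incone U V (proj1_sig (snd e)).

Lemma med_vert (u v : farey_vert) : (det (proj1_sig u) (proj1_sig v) = 1 \/ det (proj1_sig u) (proj1_sig v) = -1) ->
  exists m : farey_vert, proj1_sig m = vadd (proj1_sig u) (proj1_sig v).
Proof.
  intros Hd.
  assert (Hn : nrm (vadd (proj1_sig u) (proj1_sig v))).
  { split.
    - apply (gcd_of_det _ (proj1_sig u)).
      replace (det (vadd (proj1_sig u) (proj1_sig v)) (proj1_sig u)) with (- det (proj1_sig u) (proj1_sig v))
        by (destruct (proj1_sig u), (proj1_sig v); unfold det, vadd; simpl; ring). lia.
    - left. pose proof (fv_nrm u) as [_ Hu]. pose proof (fv_nrm v) as [_ Hv].
      destruct (proj1_sig u) as [a b], (proj1_sig v) as [c d]. unfold vadd, det in *; simpl in *. lia. }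
  exists (exist _ _ Hn). reflexivity.
Qed.

Lemma indep (U V : vec) a b : (det U V = 1 \/ det U V = -1) ->
  a * fst U + b * fst V = 0 -> a * snd U + b * snd V = 0 -> a = 0 /\ b = 0.
Proof.
  destruct U as [u1 u2], V as [v1 v2]. unfold det; simpl. intros Hd H1 H2.
  assert (Ha : a * (u1 * v2 - u2 * v1) = 0).
  { replace (a * (u1 * v2 - u2 * v1)) with ((a * u1 + b * v1) * v2 - (a * u2 + b * v2) * v1) by ring.
    rewrite H1, H2. ring. }
  assert (Hb : b * (u1 * v2 - u2 * v1) = 0).
  { replace (b * (u1 * v2 - u2 * v1)) with ((a * u2 + b * v2) * u1 - (a * u1 + b * v1) * u2) by ring.
    rewrite H1, H2. ring. }
  destruct Hd as [E|E]; rewrite E in Ha, Hb; lia.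
Qed.

Lemma incone_l U V : incone U V U.
Proof. exists 1, 0. destruct U, V; cbn [fst snd]. split; [lia|split; [lia|]]. f_equal; ring. Qed.
Lemma incone_r U V : incone U V V.
Proof. exists 0, 1. destruct U, V; cbn [fst snd]. split; [lia|split; [lia|]]. f_equal; ring. Qed.

Lemma robust_aux n : forall (u v : farey_vert) E,
  (det (proj1_sig u) (proj1_sig v) = 1 \/ det (proj1_sig u) (proj1_sig v) = -1) ->
  cnt (inreg (proj1_sig u) (proj1_sig v)) E = n -> exists w, walk (adj_minus Farey E) w u v.
Proof.
  induction n as [n IH] using (well_founded_induction lt_wf).
  intros u v E Hd Hn.
  destruct (classic (In (u, v) E \/ In (v, u) E)) as [Hin|Hnin].
  2:{ exists [u; v]. apply walk_edge. split; [apply farey_adj_det; auto|]. tauto. }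
  destruct (med_vert u v Hd) as [m Hm].
  set (U := proj1_sig u) in *. set (V := proj1_sig v) in *.
  assert (Hum : det U (proj1_sig m) = 1 \/ det U (proj1_sig m) = -1).
  { rewrite Hm. replace (det U (vadd U V)) with (det U V) by (destruct U, V; unfold det, vadd; simpl; ring). auto. }
  assert (Hmv : det (proj1_sig m) V = 1 \/ det (proj1_sig m) V = -1).
  { rewrite Hm. replace (det (vadd U V) V) with (det U V) by (destruct U, V; unfold det, vadd; simpl; ring). auto. }
  assert (HinU : incone U V U) by apply incone_l.
  assert (HinV : incone U V V) by apply incone_r.
  assert (Hlt1 : (cnt (inreg U (proj1_sig m)) E < n)%nat).
  { rewrite <- Hn. apply cnt_lt.
    - intros e _ [[a [b [Ha [Hb E1]]]] [c [d [Hc [Hd' E2]]]]]. rewrite Hm in E1, E2.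
      split; [exists (a + b), b | exists (c + d), d]; repeat split; try lia;
        [rewrite E1 | rewrite E2]; destruct U, V; unfold vadd; simpl; f_equal; ring.
    - assert (HnotV : ~ incone U (proj1_sig m) V).
      { intros [a [b [Ha [Hb E1]]]]. rewrite Hm in E1.
        destruct (indep U V (a + b) (b - 1) Hd) as [H1 H2];
          destruct U as [u1 u2], V as [v1 v2]; unfold vadd in E1; simpl in *; injection E1; intros; try lia. }
      destruct Hin as [Hin|Hin]; [exists (u, v) | exists (v, u)]; repeat split; auto;
        intros [H1 H2]; apply HnotV; auto. }
  assert (Hlt2 : (cnt (inreg (proj1_sig m) V) E < n)%nat).
  { rewrite <- Hn. apply cnt_lt.
    - intros e _ [[a [b [Ha [Hb E1]]]] [c [d [Hc [Hd' E2]]]]]. rewrite Hm in E1, E2.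
      split; [exists a, (a + b) | exists c, (c + d)]; repeat split; try lia;
        [rewrite E1 | rewrite E2]; destruct U, V; unfold vadd; simpl; f_equal; ring.
    - assert (HnotU : ~ incone (proj1_sig m) V U).
      { intros [a [b [Ha [Hb E1]]]]. rewrite Hm in E1.
        destruct (indep U V (a - 1) (a + b) Hd) as [H1 H2];
          destruct U as [u1 u2], V as [v1 v2]; unfold vadd in E1; simpl in *; injection E1; intros; try lia. }
      destruct Hin as [Hin|Hin]; [exists (u, v) | exists (v, u)]; repeat split; auto;
        intros [H1 H2]; apply HnotU; auto. }
  destruct (IH _ Hlt1 u m E Hum eq_refl) as [w1 Hw1].
  destruct (IH _ Hlt2 m v E Hmv eq_refl) as [w2 Hw2].
  exists (w1 ++ tl w2). eapply walk_app; eauto.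
Qed.

Lemma robust (u v : farey_vert) E : farey_adj u v -> exists w, walk (adj_minus Farey E) w u v.
Proof. intros H. apply farey_adj_det in H. eapply robust_aux; eauto. Qed.

Lemma walk_refine {V : Type} (R R' : V -> V -> Prop) :
  (forall a b, R a b -> exists w, walk R' w a b) ->
  forall w x y, walk R w x y -> exists w', walk R' w' x y.
Proof.
  intros Hr w. induction w as [|z t IH]; intros x y [Hh [Hl Hc]]; [discriminate|].
  simpl in Hh. injection Hh; intro; subst x.
  destruct t as [|z' t].
  - simpl in Hl. rewrite <- Hl. exists [z]. apply walk_single.
  - destruct Hc as [Hxz Hc].
    destruct (IH z' y) as [w2 Hw2].
    { repeat split; auto. rewrite last_cons_cons in Hl. rewrite <- Hl. apply last_indep. discriminate. }
    destruct (Hr z z' Hxz) as [w1 Hw1].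
    exists (w1 ++ tl w2). eapply walk_app; eauto.
Qed.

Lemma farey_iec : inf_edge_connected Farey.
Proof.
  split.
  - exists fzero, finf. intro E. apply (f_equal (@proj1_sig _ _)) in E. simpl in E. discriminate.
  - intros E' x y _ _.
    destruct (to_inf x) as [l1 H1]. destruct (to_inf y) as [l2 H2].
    pose proof (walk_app H1 (walk_rev (@farey_adj_sym) H2)) as Hw.
    destruct (walk_refine (R := farey_adj) (R' := adj_minus Farey E') (fun a b H => @robust a b E' H) Hw) as [w Hw'].
    destruct (walk_to_path Hw') as [p [Hp _]]. exists p. split; auto.
    apply Forall_forall. auto.
Qed.

Lemma farey_Pi : Pi_graph Farey.
Proof. split; [exact farey_iec | exact farey_no_inf]. Qed.

End MP10.
Import MP10.

Module MP11.
Import ListNotations.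
Set Implicit Arguments.

Lemma minor_of_Pi (G : graph) : Pi_graph G -> minor Farey G.
Proof.
  intros [[[x [y Hxy]] Hcon] HnPi].
  destruct (Hcon [] x y I I) as [p0 [Hp0 _]].
  pose proof (path_shape Hp0 Hxy) as Ep0.
  assert (Hc0 : chain (adj_minus G []) p0) by apply Hp0.
  rewrite Ep0 in Hc0.
  destruct (interior p0 ++ [y]) as [|h t] eqn:Et; [destruct (interior p0); discriminate|].
  simpl in Hc0. destruct Hc0 as [Hxh _]. apply adj_minus_adj in Hxh.
  set (u := x) in *. set (v := h) in *.
  assert (Huv : u <> v) by (intro E; rewrite E in Hxh; apply (adj_irrefl G v); auto).
  set (D0 := fun z : G => z <> u /\ z <> v).
  assert (Hg0 : good G [u] [v] D0).
  { intros E. destruct (Hcon (E ++ [(u, v)]) u v I I) as [q [Hq _]].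
    exists q, u, v. split; [left; auto|split; [left; auto|split]].
    - eapply path_mono; [|exact Hq]. intros a b. apply adj_minus_mono. intros z Hz. apply in_or_app; auto.
    - apply Forall_forall. intros z Hz. destruct (path_interior_in z Hq Hz) as [_ [H1 H2]]. split; auto. }
  destruct (core HnPi (A := [u]) (B := [v]) (D := D0)) as [C1 [D1 [D2 Hs]]].
  { intros z [Hz|[]] [Hz'|[]]. subst. apply Huv. congruence. }
  { intros z [H1 H2]. split; intros [Hz|[]]; auto. }
  { exact Hg0. }
  destruct Hs as [Hne [Hcon1 [HCD [[a [c [Ha [Hc Hac]]]] [HaB [H1 [H2 [H12 [Hg1 Hg2]]]]]]]]].
  destruct Ha as [Ha|[]]. subst a.
  assert (HC1 : forall z, In z C1 -> ~ In z [u; v]).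
  { intros z Hz [E|[E|[]]]; destruct (HCD z Hz); subst; auto. }
  apply (@farey_minor G HnPi C1 [u; v] D1 D2).
  - unfold okst, stA, stB, stD; simpl. split; [exact HC1|split].
    + intros z Hz. destruct (H1 z Hz) as [[Hz1 Hz2] HzC]. split; auto. intros [E|[E|[]]]; subst; auto.
    + apply good_sym in Hg1. eapply good_mono; [| | |exact Hg1]; [apply incl_refl| |auto].
      intros z [E|[]]; subst; left; auto.
  - unfold okst, stA, stB, stD; simpl. split; [exact HC1|split].
    + intros z Hz. destruct (H2 z Hz) as [[Hz1 Hz2] HzC]. split; auto. intros [E|[E|[]]]; subst; auto.
    + eapply good_mono; [| | |exact Hg2]; [apply incl_refl| |auto].
      intros z [E|[]]; subst; right; left; auto.
  - exact H12.
  - exact Hcon1.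
  - apply chain_connected; [intros a b; apply adj_sym|]. simpl. auto.
  - exact Hne.
  - discriminate.
  - exists c, u. split; auto. split; [left; auto|]. apply adj_sym; auto.
Qed.


End MP11.
Import MP11.

Theorem theorem1 :
  typical Farey /\ forall G : graph, typical G -> minor_equiv G Farey.
Proof.
  split.
  - split; [exact farey_Pi|]. intros G' HG'. apply minor_of_Pi; auto.
  - intros G [HPi Hmin]. split.
    + apply Hmin. exact farey_Pi.
    + apply minor_of_Pi; auto.
Qed.
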